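(* Each of the formulas D1 $=i(x,x)$, D2 $=i(i(x,x),i(n(x),n(x)))$, D3 $=i(i(x,x),i(i(y,y),i(i(x,y),i(x,y))))$ has a double-negation-free condensed-detachment proof from the axioms A1 $=i(x,i(y,x))$, A2 $=i(i(x,y),i(i(y,z),i(x,z)))$, A3 $=i(i(i(x,y),y),i(i(y,x),x))$, A4 $=i(i(n(x),n(y)),i(y,x))$.
   Context: Formulas are terms built from propositional variables using the binary connective $i$ (implication) and the unary connective $n$ (negation). Condensed detachment: from a major premiss $i(A,B)$ and a minor premiss $C$, after renaming variables so that the two premisses share no variables, if $A$ and $C$ are unifiable with most general unifier $\sigma$, infer $B\sigma$; alphabetic variants of axioms count as axioms and conclusions may be renamed. A proof is double-negation free if none of its deduced (non-axiom) steps has a subformula of the form $n(n(t))$. *)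

(* Defs.v *)
From Stdlib Require Import List Arith.
Import ListNotations.

Inductive form : Type :=
| V : nat -> form
| I : form -> form -> form
| N : form -> form.

Fixpoint subst (s : nat -> form) (f : form) : form :=
  match f with
  | V v => s v
  | I a b => I (subst s a) (subst s b)
  | N a => N (subst s a)
  end.

Definition rename (r : nat -> nat) (f : form) : form := subst (fun v => V (r v)) f.

Definition variant (F G : form) : Prop :=
  exists r : nat -> nat, (forall u v, r u = r v -> u = v) /\ G = rename r F.

Fixpoint occurs (v : nat) (f : form) : Prop :=
  match f with
  | V w => v = w
  | I a b => occurs v a \/ occurs v b
  | N a => occurs v a
  end.

Definition unifier (s : nat -> form) (A B : form) : Prop := subst s A = subst s B.

Definition mgu (s : nat -> form) (A B : form) : Prop :=
  unifier s A B /\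
  forall t, unifier t A B -> exists r : nat -> form, forall v, t v = subst r (s v).

Definition cd (P Q R : form) : Prop :=
  exists A B Q' s,
    P = I A B /\ variant Q Q' /\
    (forall v, occurs v P -> ~ occurs v Q') /\
    mgu s A Q' /\ variant (subst s B) R.

Fixpoint subformula (t f : form) : Prop :=
  t = f \/
  match f with
  | V _ => False
  | I a b => subformula t a \/ subformula t b
  | N a => subformula t a
  end.

Definition has_dneg (f : form) : Prop := exists t, subformula (N (N t)) f.

Definition x := V 0.
Definition y := V 1.
Definition z := V 2.

Definition A1 := I x (I y x).
Definition A2 := I (I x y) (I (I y z) (I x z)).
Definition A3 := I (I (I x y) y) (I (I y x) x).
Definition A4 := I (I (N x) (N y)) (I y x).
Definition axioms : list form := [A1; A2; A3; A4].

Definition D1 := I x x.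
Definition D2 := I (I x x) (I (N x) (N x)).
Definition D3 := I (I x x) (I (I y y) (I (I x y) (I x y))).

(* Justification of a proof line: an axiom (variant), or CD with major line i, minor line j. *)
Inductive just : Type :=
| Ax : just
| CD : nat -> nat -> just.

Definition line_form (pf : list (form * just)) (k : nat) : option form :=
  option_map fst (nth_error pf k).

Definition valid_line (pf : list (form * just)) (k : nat) : Prop :=
  match nth_error pf k with
  | Some (F, Ax) => exists A, In A axioms /\ variant A F
  | Some (F, CD i j) =>
      i < k /\ j < k /\
      exists P Q, line_form pf i = Some P /\ line_form pf j = Some Q /\ cd P Q F
  | None => False
  end.

Definition cd_proof (pf : list (form * just)) (F : form) : Prop :=
  pf <> [] /\
  (forall k, k < length pf -> valid_line pf k) /\
  line_form pf (length pf - 1) = Some F.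

Definition dn_free (pf : list (form * just)) : Prop :=
  forall k F i j, nth_error pf k = Some (F, CD i j) -> ~ has_dneg F.

(* Main.v *)
Require Import Defs.
From Stdlib Require Import List Arith Lia Bool.
Import ListNotations.

Fixpoint vars (f : form) : list nat :=
  match f with
  | V v => [v]
  | I a b => vars a ++ vars b
  | N a => vars a
  end.

Lemma occurs_in v f : occurs v f -> In v (vars f).
Proof.
  induction f; simpl; intros H.
  - left; auto.
  - apply in_or_app; tauto.
  - auto.
Qed.

Definition disjb (P Q : form) : bool :=
  forallb (fun v => negb (existsb (Nat.eqb v) (vars Q))) (vars P).

Lemma disjb_ok P Q : disjb P Q = true -> forall v, occurs v P -> ~ occurs v Q.
Proof.
  unfold disjb; intros H v HP HQ.
  apply occurs_in in HP; apply occurs_in in HQ.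
  rewrite forallb_forall in H. specialize (H v HP).
  apply negb_true_iff in H.
  assert (existsb (Nat.eqb v) (vars Q) = true).
  { apply existsb_exists. exists v; split; auto. apply Nat.eqb_refl. }
  congruence.
Qed.

Definition sub_of (l : list (nat * form)) (v : nat) : form :=
  match find (fun p => Nat.eqb (fst p) v) l with
  | Some p => snd p
  | None => V v
  end.

Lemma sub_of_spec (t : nat -> form) l :
  Forall (fun p => t (fst p) = subst t (snd p)) l ->
  forall v, t v = subst t (sub_of l v).
Proof.
  intros H v; unfold sub_of. induction H as [|p l Hp Hl IH]; simpl.
  - reflexivity.
  - destruct (Nat.eqb (fst p) v) eqn:E.
    + apply Nat.eqb_eq in E. subst v. exact Hp.
    + exact IH.
Qed.

Definition shift (k : nat) (f : form) := rename (fun v => v + k) f.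

Lemma cd_intro A B Q k Q' l r R :
  Q' = shift k Q ->
  disjb (I A B) Q' = true ->
  subst (sub_of l) A = subst (sub_of l) Q' ->
  (forall t, subst t A = subst t Q' -> Forall (fun p => t (fst p) = subst t (snd p)) l) ->
  (forall u v, r u = r v -> u = v) ->
  R = rename r (subst (sub_of l) B) ->
  cd (I A B) Q R.
Proof.
  intros HQ Hd Hu Hm Hr HR.
  exists A, B, Q', (sub_of l). split; [reflexivity|]. split.
  { exists (fun v => v + k). split; [intros; lia| exact HQ]. }
  split; [apply disjb_ok; exact Hd|]. split.
  { split; [exact Hu|]. intros t Ht. exists t. apply sub_of_spec. apply Hm. exact Ht. }
  exists r. split; assumption.
Qed.

Definition swap (a b v : nat) := if Nat.eqb v a then b else if Nat.eqb v b then a else v.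

Lemma swap_inj a b : forall u v, swap a b u = swap a b v -> u = v.
Proof.
  intros u v; unfold swap.
  destruct (Nat.eqb u a) eqn:E1, (Nat.eqb v a) eqn:E2, (Nat.eqb u b) eqn:E3, (Nat.eqb v b) eqn:E4;
  rewrite ?Nat.eqb_eq, ?Nat.eqb_neq in *; lia.
Qed.

Lemma comp_inj (f g : nat -> nat) :
  (forall u v, f u = f v -> u = v) -> (forall u v, g u = g v -> u = v) ->
  forall u v, g (f u) = g (f v) -> u = v.
Proof. auto. Qed.

Lemma id_inj : forall u v : nat, u = v -> u = v.
Proof. auto. Qed.

Lemma variant_refl F : variant F F.
Proof.
  exists (fun v => v). split; [exact id_inj|].
  unfold rename. induction F; simpl; congruence.
Qed.

Ltac mgu_tac :=
  let t := fresh "t" in let H := fresh "H" in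
  intros t H; cbn in H;
  repeat (apply Forall_cons; [cbn; congruence|]); apply Forall_nil.

Lemma vl_cd pf k F i j P Q :
  nth_error pf k = Some (F, CD i j) -> i < k -> j < k ->
  line_form pf i = Some P -> line_form pf j = Some Q -> cd P Q F -> valid_line pf k.
Proof. intros H1 H2 H3 H4 H5 H6. unfold valid_line. rewrite H1. eauto 10. Qed.

Lemma vl_ax pf k F A :
  nth_error pf k = Some (F, Ax) -> In A axioms -> variant A F -> valid_line pf k.
Proof. intros H1 H2 H3. unfold valid_line. rewrite H1. eauto. Qed.

Fixpoint dnb (f : form) : bool :=
  match f with
  | V _ => false
  | I a b => dnb a || dnb b
  | N (N _) => true
  | N a => dnb a
  end.

Lemma sub_dnb t f : subformula (N (N t)) f -> dnb f = true.
Proof.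
  induction f; simpl; intros [H|H].
  - discriminate.
  - destruct H.
  - discriminate.
  - apply orb_true_iff. destruct H; auto.
  - injection H as <-. reflexivity.
  - destruct f; auto. 
Qed.

Lemma dnb_ok pf : forallb (fun p => negb (dnb (fst p))) pf = true -> dn_free pf.
Proof.
  intros H k F i j Hk [t Ht].
  apply sub_dnb in Ht. rewrite forallb_forall in H.
  specialize (H (F, CD i j) (nth_error_In _ _ Hk)). simpl in H. rewrite Ht in H. discriminate.
Qed.

Definition D1_F0 : form := (I (I (V 0) (V 1)) (I (I (V 1) (V 2)) (I (V 0) (V 2)))).
Definition D1_F1 : form := (I (V 0) (I (V 1) (V 0))).
Definition D1_F2 : form := (I (I (I (V 4) (V 3)) (V 2)) (I (V 3) (V 2))).
Lemma D1_c2 : cd D1_F0 D1_F1 D1_F2.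
Proof.
  apply (cd_intro (I (V 0) (V 1)) (I (I (V 1) (V 2)) (I (V 0) (V 2))) D1_F1 3 (I (V 3) (I (V 4) (V 3))) [(0, (V 3)); (1, (I (V 4) (V 3)))] (fun v => v) D1_F2).
  - reflexivity.
  - vm_compute; reflexivity.
  - vm_compute; reflexivity.
  - mgu_tac.
  - exact id_inj.
  - vm_compute; reflexivity.
Qed.
Definition D1_F3 : form := (I (I (I (V 0) (V 1)) (V 1)) (I (I (V 1) (V 0)) (V 0))).
Definition D1_F4 : form := (I (V 1) (I (V 2) (I (V 3) (V 2)))).
Lemma D1_c4 : cd D1_F1 D1_F1 D1_F4.
Proof.
  apply (cd_intro (V 0) (I (V 1) (V 0)) D1_F1 2 (I (V 2) (I (V 3) (V 2))) [(0, (I (V 2) (I (V 3) (V 2))))] (fun v => v) D1_F4).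
  - reflexivity.
  - vm_compute; reflexivity.
  - vm_compute; reflexivity.
  - mgu_tac.
  - exact id_inj.
  - vm_compute; reflexivity.
Qed.
Definition D1_F5 : form := (I (I (I (V 4) (I (V 5) (V 4))) (V 0)) (V 0)).
Lemma D1_c5 : cd D1_F3 D1_F4 D1_F5.
Proof.
  apply (cd_intro (I (I (V 0) (V 1)) (V 1)) (I (I (V 1) (V 0)) (V 0)) D1_F4 2 (I (V 3) (I (V 4) (I (V 5) (V 4)))) [(1, (I (V 4) (I (V 5) (V 4)))); (3, (I (V 0) (I (V 4) (I (V 5) (V 4)))))] (fun v => v) D1_F5).
  - reflexivity.
  - vm_compute; reflexivity.
  - vm_compute; reflexivity.
  - mgu_tac.
  - exact id_inj.
  - vm_compute; reflexivity.
Qed.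
Definition D1_F6 : form := (I (V 0) (V 0)).
Lemma D1_c6 : cd D1_F2 D1_F5 D1_F6.
Proof.
  apply (cd_intro (I (I (V 4) (V 3)) (V 2)) (I (V 3) (V 2)) D1_F5 5 (I (I (I (V 9) (I (V 10) (V 9))) (V 5)) (V 5)) [(2, (V 5)); (3, (V 5)); (4, (I (V 9) (I (V 10) (V 9))))] (fun v => swap 5 0 ((fun v => v) v)) D1_F6).
  - reflexivity.
  - vm_compute; reflexivity.
  - vm_compute; reflexivity.
  - mgu_tac.
  - exact (comp_inj _ _ id_inj (swap_inj 5 0)).
  - vm_compute; reflexivity.
Qed.
Definition D1_pf : list (form * just) := [(D1_F0, Ax); (D1_F1, Ax); (D1_F2, CD 0 1); (D1_F3, Ax); (D1_F4, CD 1 1); (D1_F5, CD 3 4); (D1_F6, CD 2 5)].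
Lemma D1_valid : forall k, k < length D1_pf -> valid_line D1_pf k.
Proof.
  intros k Hk.
  destruct k as [|k]; [exact (vl_ax D1_pf 0 D1_F0 A2 eq_refl ltac:(unfold axioms; simpl; tauto) (variant_refl _))|].
  destruct k as [|k]; [exact (vl_ax D1_pf 1 D1_F1 A1 eq_refl ltac:(unfold axioms; simpl; tauto) (variant_refl _))|].
  destruct k as [|k]; [exact (vl_cd D1_pf 2 D1_F2 0 1 D1_F0 D1_F1 eq_refl ltac:(lia) ltac:(lia) eq_refl eq_refl D1_c2)|].
  destruct k as [|k]; [exact (vl_ax D1_pf 3 D1_F3 A3 eq_refl ltac:(unfold axioms; simpl; tauto) (variant_refl _))|].
  destruct k as [|k]; [exact (vl_cd D1_pf 4 D1_F4 1 1 D1_F1 D1_F1 eq_refl ltac:(lia) ltac:(lia) eq_refl eq_refl D1_c4)|].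
  destruct k as [|k]; [exact (vl_cd D1_pf 5 D1_F5 3 4 D1_F3 D1_F4 eq_refl ltac:(lia) ltac:(lia) eq_refl eq_refl D1_c5)|].
  destruct k as [|k]; [exact (vl_cd D1_pf 6 D1_F6 2 5 D1_F2 D1_F5 eq_refl ltac:(lia) ltac:(lia) eq_refl eq_refl D1_c6)|].
  exfalso; simpl in Hk; lia.
Qed.
Lemma D1_proof : cd_proof D1_pf D1 /\ dn_free D1_pf.
Proof.
  split; [split; [discriminate | split; [exact D1_valid | reflexivity]] | apply dnb_ok; vm_compute; reflexivity].
Qed.

Definition D2_F0 : form := (I (I (I (V 0) (V 1)) (V 1)) (I (I (V 1) (V 0)) (V 0))).
Definition D2_F1 : form := (I (I (V 0) (V 1)) (I (I (V 1) (V 2)) (I (V 0) (V 2)))).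
Definition D2_F2 : form := (I (V 0) (I (V 1) (V 0))).
Definition D2_F3 : form := (I (I (I (V 4) (V 3)) (V 2)) (I (V 3) (V 2))).
Lemma D2_c3 : cd D2_F1 D2_F2 D2_F3.
Proof.
  apply (cd_intro (I (V 0) (V 1)) (I (I (V 1) (V 2)) (I (V 0) (V 2))) D2_F2 3 (I (V 3) (I (V 4) (V 3))) [(0, (V 3)); (1, (I (V 4) (V 3)))] (fun v => v) D2_F3).
  - reflexivity.
  - vm_compute; reflexivity.
  - vm_compute; reflexivity.
  - mgu_tac.
  - exact id_inj.
  - vm_compute; reflexivity.
Qed.
Definition D2_F4 : form := (I (V 6) (I (I (V 6) (V 5)) (V 5))).
Lemma D2_c4 : cd D2_F3 D2_F0 D2_F4.
Proof.
  apply (cd_intro (I (I (V 4) (V 3)) (V 2)) (I (V 3) (V 2)) D2_F0 5 (I (I (I (V 5) (V 6)) (V 6)) (I (I (V 6) (V 5)) (V 5))) [(2, (I (I (V 6) (V 5)) (V 5))); (3, (V 6)); (4, (I (V 5) (V 6)))] (fun v => v) D2_F4).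
  - reflexivity.
  - vm_compute; reflexivity.
  - vm_compute; reflexivity.
  - mgu_tac.
  - exact id_inj.
  - vm_compute; reflexivity.
Qed.
Definition D2_F5 : form := (I (V 1) (I (V 2) (I (V 3) (V 2)))).
Lemma D2_c5 : cd D2_F2 D2_F2 D2_F5.
Proof.
  apply (cd_intro (V 0) (I (V 1) (V 0)) D2_F2 2 (I (V 2) (I (V 3) (V 2))) [(0, (I (V 2) (I (V 3) (V 2))))] (fun v => v) D2_F5).
  - reflexivity.
  - vm_compute; reflexivity.
  - vm_compute; reflexivity.
  - mgu_tac.
  - exact id_inj.
  - vm_compute; reflexivity.
Qed.
Definition D2_F6 : form := (I (I (I (V 4) (I (V 5) (V 4))) (V 0)) (V 0)).
Lemma D2_c6 : cd D2_F0 D2_F5 D2_F6.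
Proof.
  apply (cd_intro (I (I (V 0) (V 1)) (V 1)) (I (I (V 1) (V 0)) (V 0)) D2_F5 2 (I (V 3) (I (V 4) (I (V 5) (V 4)))) [(1, (I (V 4) (I (V 5) (V 4)))); (3, (I (V 0) (I (V 4) (I (V 5) (V 4)))))] (fun v => v) D2_F6).
  - reflexivity.
  - vm_compute; reflexivity.
  - vm_compute; reflexivity.
  - mgu_tac.
  - exact id_inj.
  - vm_compute; reflexivity.
Qed.
Definition D2_F7 : form := (I (V 5) (V 5)).
Lemma D2_c7 : cd D2_F3 D2_F6 D2_F7.
Proof.
  apply (cd_intro (I (I (V 4) (V 3)) (V 2)) (I (V 3) (V 2)) D2_F6 5 (I (I (I (V 9) (I (V 10) (V 9))) (V 5)) (V 5)) [(2, (V 5)); (3, (V 5)); (4, (I (V 9) (I (V 10) (V 9))))] (fun v => v) D2_F7).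
  - reflexivity.
  - vm_compute; reflexivity.
  - vm_compute; reflexivity.
  - mgu_tac.
  - exact id_inj.
  - vm_compute; reflexivity.
Qed.
Definition D2_F8 : form := (I (I (I (V 12) (V 12)) (V 5)) (V 5)).
Lemma D2_c8 : cd D2_F4 D2_F7 D2_F8.
Proof.
  apply (cd_intro (V 6) (I (I (V 6) (V 5)) (V 5)) D2_F7 7 (I (V 12) (V 12)) [(6, (I (V 12) (V 12)))] (fun v => v) D2_F8).
  - reflexivity.
  - vm_compute; reflexivity.
  - vm_compute; reflexivity.
  - mgu_tac.
  - exact id_inj.
  - vm_compute; reflexivity.
Qed.
Definition D2_F9 : form := (I (I (V 7) (I (V 14) (V 14))) (I (V 14) (V 14))).
Lemma D2_c9 : cd D2_F0 D2_F8 D2_F9.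
Proof.
  apply (cd_intro (I (I (V 0) (V 1)) (V 1)) (I (I (V 1) (V 0)) (V 0)) D2_F8 2 (I (I (I (V 14) (V 14)) (V 7)) (V 7)) [(0, (I (V 14) (V 14))); (1, (V 7))] (fun v => v) D2_F9).
  - reflexivity.
  - vm_compute; reflexivity.
  - vm_compute; reflexivity.
  - mgu_tac.
  - exact id_inj.
  - vm_compute; reflexivity.
Qed.
Definition D2_F10 : form := (I (V 3) (I (V 6) (I (V 4) (V 3)))).
Lemma D2_c10 : cd D2_F3 D2_F2 D2_F10.
Proof.
  apply (cd_intro (I (I (V 4) (V 3)) (V 2)) (I (V 3) (V 2)) D2_F2 5 (I (V 5) (I (V 6) (V 5))) [(2, (I (V 6) (I (V 4) (V 3)))); (5, (I (V 4) (V 3)))] (fun v => v) D2_F10).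
  - reflexivity.
  - vm_compute; reflexivity.
  - vm_compute; reflexivity.
  - mgu_tac.
  - exact id_inj.
  - vm_compute; reflexivity.
Qed.
Definition D2_F11 : form := (I (V 6) (I (V 4) (I (V 12) (V 12)))).
Lemma D2_c11 : cd D2_F10 D2_F7 D2_F11.
Proof.
  apply (cd_intro (V 3) (I (V 6) (I (V 4) (V 3))) D2_F7 7 (I (V 12) (V 12)) [(3, (I (V 12) (V 12)))] (fun v => v) D2_F11).
  - reflexivity.
  - vm_compute; reflexivity.
  - vm_compute; reflexivity.
  - mgu_tac.
  - exact id_inj.
  - vm_compute; reflexivity.
Qed.
Definition D2_F12 : form := (I (I (V 27) (V 27)) (I (V 27) (V 27))).
Lemma D2_c12 : cd D2_F9 D2_F11 D2_F12.
Proof.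
  apply (cd_intro (I (V 7) (I (V 14) (V 14))) (I (V 14) (V 14)) D2_F11 15 (I (V 21) (I (V 19) (I (V 27) (V 27)))) [(7, (V 21)); (14, (I (V 27) (V 27))); (19, (I (V 27) (V 27)))] (fun v => v) D2_F12).
  - reflexivity.
  - vm_compute; reflexivity.
  - vm_compute; reflexivity.
  - mgu_tac.
  - exact id_inj.
  - vm_compute; reflexivity.
Qed.
Definition D2_F13 : form := (I (V 6) (I (I (V 6) (V 7)) (I (V 5) (V 7)))).
Lemma D2_c13 : cd D2_F3 D2_F1 D2_F13.
Proof.
  apply (cd_intro (I (I (V 4) (V 3)) (V 2)) (I (V 3) (V 2)) D2_F1 5 (I (I (V 5) (V 6)) (I (I (V 6) (V 7)) (I (V 5) (V 7)))) [(2, (I (I (V 6) (V 7)) (I (V 5) (V 7)))); (3, (V 6)); (4, (V 5))] (fun v => v) D2_F13).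
  - reflexivity.
  - vm_compute; reflexivity.
  - vm_compute; reflexivity.
  - mgu_tac.
  - exact id_inj.
  - vm_compute; reflexivity.
Qed.
Definition D2_F14 : form := (I (I (I (V 13) (V 13)) (V 7)) (I (V 5) (V 7))).
Lemma D2_c14 : cd D2_F13 D2_F7 D2_F14.
Proof.
  apply (cd_intro (V 6) (I (I (V 6) (V 7)) (I (V 5) (V 7))) D2_F7 8 (I (V 13) (V 13)) [(6, (I (V 13) (V 13)))] (fun v => v) D2_F14).
  - reflexivity.
  - vm_compute; reflexivity.
  - vm_compute; reflexivity.
  - mgu_tac.
  - exact id_inj.
  - vm_compute; reflexivity.
Qed.
Definition D2_F15 : form := (I (I (I (V 41) (V 41)) (V 35)) (I (I (V 41) (V 41)) (V 35))).
Lemma D2_c15 : cd D2_F12 D2_F14 D2_F15.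
Proof.
  apply (cd_intro (I (V 27) (V 27)) (I (V 27) (V 27)) D2_F14 28 (I (I (I (V 41) (V 41)) (V 35)) (I (V 33) (V 35))) [(27, (I (I (V 41) (V 41)) (V 35))); (33, (I (V 41) (V 41)))] (fun v => v) D2_F15).
  - reflexivity.
  - vm_compute; reflexivity.
  - vm_compute; reflexivity.
  - mgu_tac.
  - exact id_inj.
  - vm_compute; reflexivity.
Qed.
Definition D2_F16 : form := (I (V 32) (I (V 32) (V 32))).
Lemma D2_c16 : cd D2_F3 D2_F12 D2_F16.
Proof.
  apply (cd_intro (I (I (V 4) (V 3)) (V 2)) (I (V 3) (V 2)) D2_F12 5 (I (I (V 32) (V 32)) (I (V 32) (V 32))) [(2, (I (V 32) (V 32))); (3, (V 32)); (4, (V 32))] (fun v => v) D2_F16).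
  - reflexivity.
  - vm_compute; reflexivity.
  - vm_compute; reflexivity.
  - mgu_tac.
  - exact id_inj.
  - vm_compute; reflexivity.
Qed.
Definition D2_F17 : form := (I (I (I (V 35) (V 35)) (V 2)) (I (V 35) (V 2))).
Lemma D2_c17 : cd D2_F1 D2_F16 D2_F17.
Proof.
  apply (cd_intro (I (V 0) (V 1)) (I (I (V 1) (V 2)) (I (V 0) (V 2))) D2_F16 3 (I (V 35) (I (V 35) (V 35))) [(0, (V 35)); (1, (I (V 35) (V 35)))] (fun v => v) D2_F17).
  - reflexivity.
  - vm_compute; reflexivity.
  - vm_compute; reflexivity.
  - mgu_tac.
  - exact id_inj.
  - vm_compute; reflexivity.
Qed.
Definition D2_F18 : form := (I (I (N (V 0)) (N (V 1))) (I (V 1) (V 0))).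
Definition D2_F19 : form := (I (N (V 6)) (I (V 6) (V 5))).
Lemma D2_c19 : cd D2_F3 D2_F18 D2_F19.
Proof.
  apply (cd_intro (I (I (V 4) (V 3)) (V 2)) (I (V 3) (V 2)) D2_F18 5 (I (I (N (V 5)) (N (V 6))) (I (V 6) (V 5))) [(2, (I (V 6) (V 5))); (3, (N (V 6))); (4, (N (V 5)))] (fun v => v) D2_F19).
  - reflexivity.
  - vm_compute; reflexivity.
  - vm_compute; reflexivity.
  - mgu_tac.
  - exact id_inj.
  - vm_compute; reflexivity.
Qed.
Definition D2_F20 : form := (I (I (I (V 9) (V 8)) (V 2)) (I (N (V 9)) (V 2))).
Lemma D2_c20 : cd D2_F1 D2_F19 D2_F20.
Proof.
  apply (cd_intro (I (V 0) (V 1)) (I (I (V 1) (V 2)) (I (V 0) (V 2))) D2_F19 3 (I (N (V 9)) (I (V 9) (V 8))) [(0, (N (V 9))); (1, (I (V 9) (V 8)))] (fun v => v) D2_F20).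
  - reflexivity.
  - vm_compute; reflexivity.
  - vm_compute; reflexivity.
  - mgu_tac.
  - exact id_inj.
  - vm_compute; reflexivity.
Qed.
Definition D2_F21 : form := (I (I (V 45) (V 44)) (I (N (V 45)) (I (V 45) (V 44)))).
Lemma D2_c21 : cd D2_F17 D2_F20 D2_F21.
Proof.
  apply (cd_intro (I (I (V 35) (V 35)) (V 2)) (I (V 35) (V 2)) D2_F20 36 (I (I (I (V 45) (V 44)) (V 38)) (I (N (V 45)) (V 38))) [(2, (I (N (V 45)) (I (V 45) (V 44)))); (35, (I (V 45) (V 44))); (38, (I (V 45) (V 44)))] (fun v => v) D2_F21).
  - reflexivity.
  - vm_compute; reflexivity.
  - vm_compute; reflexivity.
  - mgu_tac.
  - exact id_inj.
  - vm_compute; reflexivity.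
Qed.
Definition D2_F22 : form := (I (V 49) (I (N (V 50)) (I (V 50) (V 49)))).
Lemma D2_c22 : cd D2_F3 D2_F21 D2_F22.
Proof.
  apply (cd_intro (I (I (V 4) (V 3)) (V 2)) (I (V 3) (V 2)) D2_F21 5 (I (I (V 50) (V 49)) (I (N (V 50)) (I (V 50) (V 49)))) [(2, (I (N (V 50)) (I (V 50) (V 49)))); (3, (V 49)); (4, (V 50))] (fun v => v) D2_F22).
  - reflexivity.
  - vm_compute; reflexivity.
  - vm_compute; reflexivity.
  - mgu_tac.
  - exact id_inj.
  - vm_compute; reflexivity.
Qed.
Definition D2_F23 : form := (I (I (I (N (V 53)) (I (V 53) (V 52))) (V 2)) (I (V 52) (V 2))).
Lemma D2_c23 : cd D2_F1 D2_F22 D2_F23.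
Proof.
  apply (cd_intro (I (V 0) (V 1)) (I (I (V 1) (V 2)) (I (V 0) (V 2))) D2_F22 3 (I (V 52) (I (N (V 53)) (I (V 53) (V 52)))) [(0, (V 52)); (1, (I (N (V 53)) (I (V 53) (V 52))))] (fun v => v) D2_F23).
  - reflexivity.
  - vm_compute; reflexivity.
  - vm_compute; reflexivity.
  - mgu_tac.
  - exact id_inj.
  - vm_compute; reflexivity.
Qed.
Definition D2_F24 : form := (I (I (I (I (V 9) (V 8)) (V 8)) (V 2)) (I (V 9) (V 2))).
Lemma D2_c24 : cd D2_F1 D2_F4 D2_F24.
Proof.
  apply (cd_intro (I (V 0) (V 1)) (I (I (V 1) (V 2)) (I (V 0) (V 2))) D2_F4 3 (I (V 9) (I (I (V 9) (V 8)) (V 8))) [(0, (V 9)); (1, (I (I (V 9) (V 8)) (V 8)))] (fun v => v) D2_F24).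
  - reflexivity.
  - vm_compute; reflexivity.
  - vm_compute; reflexivity.
  - mgu_tac.
  - exact id_inj.
  - vm_compute; reflexivity.
Qed.
Definition D2_F25 : form := (I (V 10) (I (I (V 11) (V 10)) (V 10))).
Lemma D2_c25 : cd D2_F24 D2_F0 D2_F25.
Proof.
  apply (cd_intro (I (I (I (V 9) (V 8)) (V 8)) (V 2)) (I (V 9) (V 2)) D2_F0 10 (I (I (I (V 10) (V 11)) (V 11)) (I (I (V 11) (V 10)) (V 10))) [(2, (I (I (V 11) (V 10)) (V 10))); (8, (V 11)); (9, (V 10))] (fun v => v) D2_F25).
  - reflexivity.
  - vm_compute; reflexivity.
  - vm_compute; reflexivity.
  - mgu_tac.
  - exact id_inj.
  - vm_compute; reflexivity.
Qed.
Definition D2_F26 : form := (I (I (I (I (V 14) (V 13)) (V 13)) (V 2)) (I (V 13) (V 2))).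
Lemma D2_c26 : cd D2_F1 D2_F25 D2_F26.
Proof.
  apply (cd_intro (I (V 0) (V 1)) (I (I (V 1) (V 2)) (I (V 0) (V 2))) D2_F25 3 (I (V 13) (I (I (V 14) (V 13)) (V 13))) [(0, (V 13)); (1, (I (I (V 14) (V 13)) (V 13)))] (fun v => v) D2_F26).
  - reflexivity.
  - vm_compute; reflexivity.
  - vm_compute; reflexivity.
  - mgu_tac.
  - exact id_inj.
  - vm_compute; reflexivity.
Qed.
Definition D2_F27 : form := (I (I (V 40) (V 39)) (I (V 39) (I (V 40) (V 39)))).
Lemma D2_c27 : cd D2_F17 D2_F3 D2_F27.
Proof.
  apply (cd_intro (I (I (V 35) (V 35)) (V 2)) (I (V 35) (V 2)) D2_F3 36 (I (I (I (V 40) (V 39)) (V 38)) (I (V 39) (V 38))) [(2, (I (V 39) (I (V 40) (V 39)))); (35, (I (V 40) (V 39))); (38, (I (V 40) (V 39)))] (fun v => v) D2_F27).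
  - reflexivity.
  - vm_compute; reflexivity.
  - vm_compute; reflexivity.
  - mgu_tac.
  - exact id_inj.
  - vm_compute; reflexivity.
Qed.
Definition D2_F28 : form := (I (V 19) (I (N (V 19)) (V 12))).
Lemma D2_c28 : cd D2_F24 D2_F20 D2_F28.
Proof.
  apply (cd_intro (I (I (I (V 9) (V 8)) (V 8)) (V 2)) (I (V 9) (V 2)) D2_F20 10 (I (I (I (V 19) (V 18)) (V 12)) (I (N (V 19)) (V 12))) [(2, (I (N (V 19)) (V 12))); (8, (V 12)); (9, (V 19)); (18, (V 12))] (fun v => v) D2_F28).
  - reflexivity.
  - vm_compute; reflexivity.
  - vm_compute; reflexivity.
  - mgu_tac.
  - exact id_inj.
  - vm_compute; reflexivity.
Qed.
Definition D2_F29 : form := (I (I (N (V 60)) (V 53)) (I (V 60) (I (N (V 60)) (V 53)))).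
Lemma D2_c29 : cd D2_F27 D2_F28 D2_F29.
Proof.
  apply (cd_intro (I (V 40) (V 39)) (I (V 39) (I (V 40) (V 39))) D2_F28 41 (I (V 60) (I (N (V 60)) (V 53))) [(39, (I (N (V 60)) (V 53))); (40, (V 60))] (fun v => v) D2_F29).
  - reflexivity.
  - vm_compute; reflexivity.
  - vm_compute; reflexivity.
  - mgu_tac.
  - exact id_inj.
  - vm_compute; reflexivity.
Qed.
Definition D2_F30 : form := (I (V 67) (I (N (V 67)) (I (V 67) (V 66)))).
Lemma D2_c30 : cd D2_F29 D2_F19 D2_F30.
Proof.
  apply (cd_intro (I (N (V 60)) (V 53)) (I (V 60) (I (N (V 60)) (V 53))) D2_F19 61 (I (N (V 67)) (I (V 67) (V 66))) [(53, (I (V 67) (V 66))); (60, (V 67))] (fun v => v) D2_F30).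
  - reflexivity.
  - vm_compute; reflexivity.
  - vm_compute; reflexivity.
  - mgu_tac.
  - exact id_inj.
  - vm_compute; reflexivity.
Qed.
Definition D2_F31 : form := (I (I (I (N (V 70)) (I (V 70) (V 69))) (V 2)) (I (V 70) (V 2))).
Lemma D2_c31 : cd D2_F1 D2_F30 D2_F31.
Proof.
  apply (cd_intro (I (V 0) (V 1)) (I (I (V 1) (V 2)) (I (V 0) (V 2))) D2_F30 3 (I (V 70) (I (N (V 70)) (I (V 70) (V 69)))) [(0, (V 70)); (1, (I (N (V 70)) (I (V 70) (V 69))))] (fun v => v) D2_F31).
  - reflexivity.
  - vm_compute; reflexivity.
  - vm_compute; reflexivity.
  - mgu_tac.
  - exact id_inj.
  - vm_compute; reflexivity.
Qed.
Definition D2_F32 : form := (I (I (V 85) (V 84)) (I (V 85) (I (V 85) (V 84)))).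
Lemma D2_c32 : cd D2_F26 D2_F31 D2_F32.
Proof.
  apply (cd_intro (I (I (I (V 14) (V 13)) (V 13)) (V 2)) (I (V 13) (V 2)) D2_F31 15 (I (I (I (N (V 85)) (I (V 85) (V 84))) (V 17)) (I (V 85) (V 17))) [(2, (I (V 85) (I (V 85) (V 84)))); (13, (I (V 85) (V 84))); (14, (N (V 85))); (17, (I (V 85) (V 84)))] (fun v => v) D2_F32).
  - reflexivity.
  - vm_compute; reflexivity.
  - vm_compute; reflexivity.
  - mgu_tac.
  - exact id_inj.
  - vm_compute; reflexivity.
Qed.
Definition D2_F33 : form := (I (V 9) (I (V 11) (I (I (V 9) (V 8)) (V 8)))).
Lemma D2_c33 : cd D2_F24 D2_F2 D2_F33.
Proof.
  apply (cd_intro (I (I (I (V 9) (V 8)) (V 8)) (V 2)) (I (V 9) (V 2)) D2_F2 10 (I (V 10) (I (V 11) (V 10))) [(2, (I (V 11) (I (I (V 9) (V 8)) (V 8)))); (10, (I (I (V 9) (V 8)) (V 8)))] (fun v => v) D2_F33).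
  - reflexivity.
  - vm_compute; reflexivity.
  - vm_compute; reflexivity.
  - mgu_tac.
  - exact id_inj.
  - vm_compute; reflexivity.
Qed.
Definition D2_F34 : form := (I (I (I (V 24) (V 23)) (V 23)) (I (I (V 24) (V 23)) (V 23))).
Lemma D2_c34 : cd D2_F9 D2_F33 D2_F34.
Proof.
  apply (cd_intro (I (V 7) (I (V 14) (V 14))) (I (V 14) (V 14)) D2_F33 15 (I (V 24) (I (V 26) (I (I (V 24) (V 23)) (V 23)))) [(7, (V 24)); (14, (I (I (V 24) (V 23)) (V 23))); (26, (I (I (V 24) (V 23)) (V 23)))] (fun v => v) D2_F34).
  - reflexivity.
  - vm_compute; reflexivity.
  - vm_compute; reflexivity.
  - mgu_tac.
  - exact id_inj.
  - vm_compute; reflexivity.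
Qed.
Definition D2_F35 : form := (I (N (I (V 22) (V 22))) (V 15)).
Lemma D2_c35 : cd D2_F20 D2_F8 D2_F35.
Proof.
  apply (cd_intro (I (I (V 9) (V 8)) (V 2)) (I (N (V 9)) (V 2)) D2_F8 10 (I (I (I (V 22) (V 22)) (V 15)) (V 15)) [(2, (V 15)); (8, (V 15)); (9, (I (V 22) (V 22)))] (fun v => v) D2_F35).
  - reflexivity.
  - vm_compute; reflexivity.
  - vm_compute; reflexivity.
  - mgu_tac.
  - exact id_inj.
  - vm_compute; reflexivity.
Qed.
Definition D2_F36 : form := (I (I (V 18) (V 2)) (I (N (I (V 25) (V 25))) (V 2))).
Lemma D2_c36 : cd D2_F1 D2_F35 D2_F36.
Proof.
  apply (cd_intro (I (V 0) (V 1)) (I (I (V 1) (V 2)) (I (V 0) (V 2))) D2_F35 3 (I (N (I (V 25) (V 25))) (V 18)) [(0, (N (I (V 25) (V 25)))); (1, (V 18))] (fun v => v) D2_F36).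
  - reflexivity.
  - vm_compute; reflexivity.
  - vm_compute; reflexivity.
  - mgu_tac.
  - exact id_inj.
  - vm_compute; reflexivity.
Qed.
Definition D2_F37 : form := (I (I (V 44) (V 44)) (I (N (I (V 67) (V 67))) (V 44))).
Lemma D2_c37 : cd D2_F15 D2_F36 D2_F37.
Proof.
  apply (cd_intro (I (I (V 41) (V 41)) (V 35)) (I (I (V 41) (V 41)) (V 35)) D2_F36 42 (I (I (V 60) (V 44)) (I (N (I (V 67) (V 67))) (V 44))) [(35, (I (N (I (V 67) (V 67))) (V 44))); (41, (V 44)); (60, (V 44))] (fun v => v) D2_F37).
  - reflexivity.
  - vm_compute; reflexivity.
  - vm_compute; reflexivity.
  - mgu_tac.
  - exact id_inj.
  - vm_compute; reflexivity.
Qed.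
Definition D2_F38 : form := (I (V 1) (I (N (V 8)) (I (V 8) (V 7)))).
Lemma D2_c38 : cd D2_F2 D2_F19 D2_F38.
Proof.
  apply (cd_intro (V 0) (I (V 1) (V 0)) D2_F19 2 (I (N (V 8)) (I (V 8) (V 7))) [(0, (I (N (V 8)) (I (V 8) (V 7))))] (fun v => v) D2_F38).
  - reflexivity.
  - vm_compute; reflexivity.
  - vm_compute; reflexivity.
  - mgu_tac.
  - exact id_inj.
  - vm_compute; reflexivity.
Qed.
Definition D2_F39 : form := (I (I (I (N (V 10)) (I (V 10) (V 9))) (V 0)) (V 0)).
Lemma D2_c39 : cd D2_F0 D2_F38 D2_F39.
Proof.
  apply (cd_intro (I (I (V 0) (V 1)) (V 1)) (I (I (V 1) (V 0)) (V 0)) D2_F38 2 (I (V 3) (I (N (V 10)) (I (V 10) (V 9)))) [(1, (I (N (V 10)) (I (V 10) (V 9)))); (3, (I (V 0) (I (N (V 10)) (I (V 10) (V 9)))))] (fun v => v) D2_F39).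
  - reflexivity.
  - vm_compute; reflexivity.
  - vm_compute; reflexivity.
  - mgu_tac.
  - exact id_inj.
  - vm_compute; reflexivity.
Qed.
Definition D2_F40 : form := (I (N (I (N (V 20)) (I (V 20) (V 19)))) (V 10)).
Lemma D2_c40 : cd D2_F20 D2_F39 D2_F40.
Proof.
  apply (cd_intro (I (I (V 9) (V 8)) (V 2)) (I (N (V 9)) (V 2)) D2_F39 10 (I (I (I (N (V 20)) (I (V 20) (V 19))) (V 10)) (V 10)) [(2, (V 10)); (8, (V 10)); (9, (I (N (V 20)) (I (V 20) (V 19))))] (fun v => v) D2_F40).
  - reflexivity.
  - vm_compute; reflexivity.
  - vm_compute; reflexivity.
  - mgu_tac.
  - exact id_inj.
  - vm_compute; reflexivity.
Qed.
Definition D2_F41 : form := (I (N (I (V 67) (V 67))) (N (I (N (V 88)) (I (V 88) (V 87))))).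
Lemma D2_c41 : cd D2_F37 D2_F40 D2_F41.
Proof.
  apply (cd_intro (I (V 44) (V 44)) (I (N (I (V 67) (V 67))) (V 44)) D2_F40 68 (I (N (I (N (V 88)) (I (V 88) (V 87)))) (V 78)) [(44, (N (I (N (V 88)) (I (V 88) (V 87))))); (78, (N (I (N (V 88)) (I (V 88) (V 87)))))] (fun v => v) D2_F41).
  - reflexivity.
  - vm_compute; reflexivity.
  - vm_compute; reflexivity.
  - mgu_tac.
  - exact id_inj.
  - vm_compute; reflexivity.
Qed.
Definition D2_F42 : form := (I (I (N (V 90)) (I (V 90) (V 89))) (I (V 69) (V 69))).
Lemma D2_c42 : cd D2_F18 D2_F41 D2_F42.
Proof.
  apply (cd_intro (I (N (V 0)) (N (V 1))) (I (V 1) (V 0)) D2_F41 2 (I (N (I (V 69) (V 69))) (N (I (N (V 90)) (I (V 90) (V 89))))) [(0, (I (V 69) (V 69))); (1, (I (N (V 90)) (I (V 90) (V 89))))] (fun v => v) D2_F42).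
  - reflexivity.
  - vm_compute; reflexivity.
  - vm_compute; reflexivity.
  - mgu_tac.
  - exact id_inj.
  - vm_compute; reflexivity.
Qed.
Definition D2_F43 : form := (I (I (N (V 94)) (I (V 94) (V 94))) (I (V 94) (V 94))).
Lemma D2_c43 : cd D2_F34 D2_F42 D2_F43.
Proof.
  apply (cd_intro (I (I (V 24) (V 23)) (V 23)) (I (I (V 24) (V 23)) (V 23)) D2_F42 25 (I (I (N (V 115)) (I (V 115) (V 114))) (I (V 94) (V 94))) [(23, (I (V 94) (V 94))); (24, (N (V 94))); (114, (V 94)); (115, (V 94))] (fun v => v) D2_F43).
  - reflexivity.
  - vm_compute; reflexivity.
  - vm_compute; reflexivity.
  - mgu_tac.
  - exact id_inj.
  - vm_compute; reflexivity.
Qed.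
Definition D2_F44 : form := (I (V 1) (I (V 7) (V 7))).
Lemma D2_c44 : cd D2_F2 D2_F7 D2_F44.
Proof.
  apply (cd_intro (V 0) (I (V 1) (V 0)) D2_F7 2 (I (V 7) (V 7)) [(0, (I (V 7) (V 7)))] (fun v => v) D2_F44).
  - reflexivity.
  - vm_compute; reflexivity.
  - vm_compute; reflexivity.
  - mgu_tac.
  - exact id_inj.
  - vm_compute; reflexivity.
Qed.
Definition D2_F45 : form := (I (V 87) (I (V 87) (I (V 93) (V 93)))).
Lemma D2_c45 : cd D2_F32 D2_F44 D2_F45.
Proof.
  apply (cd_intro (I (V 85) (V 84)) (I (V 85) (I (V 85) (V 84))) D2_F44 86 (I (V 87) (I (V 93) (V 93))) [(84, (I (V 93) (V 93))); (85, (V 87))] (fun v => v) D2_F45).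
  - reflexivity.
  - vm_compute; reflexivity.
  - vm_compute; reflexivity.
  - mgu_tac.
  - exact id_inj.
  - vm_compute; reflexivity.
Qed.
Definition D2_F46 : form := (I (I (I (V 90) (I (V 96) (V 96))) (V 2)) (I (V 90) (V 2))).
Lemma D2_c46 : cd D2_F1 D2_F45 D2_F46.
Proof.
  apply (cd_intro (I (V 0) (V 1)) (I (I (V 1) (V 2)) (I (V 0) (V 2))) D2_F45 3 (I (V 90) (I (V 90) (I (V 96) (V 96)))) [(0, (V 90)); (1, (I (V 90) (I (V 96) (V 96))))] (fun v => v) D2_F46).
  - reflexivity.
  - vm_compute; reflexivity.
  - vm_compute; reflexivity.
  - mgu_tac.
  - exact id_inj.
  - vm_compute; reflexivity.
Qed.
Definition D2_F47 : form := (I (I (V 24) (V 12)) (I (V 12) (V 12))).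
Lemma D2_c47 : cd D2_F24 D2_F26 D2_F47.
Proof.
  apply (cd_intro (I (I (I (V 9) (V 8)) (V 8)) (V 2)) (I (V 9) (V 2)) D2_F26 10 (I (I (I (I (V 24) (V 23)) (V 23)) (V 12)) (I (V 23) (V 12))) [(2, (I (V 12) (V 12))); (8, (V 12)); (9, (I (V 24) (V 12))); (23, (V 12))] (fun v => v) D2_F47).
  - reflexivity.
  - vm_compute; reflexivity.
  - vm_compute; reflexivity.
  - mgu_tac.
  - exact id_inj.
  - vm_compute; reflexivity.
Qed.
Definition D2_F48 : form := (I (I (I (V 15) (V 15)) (V 2)) (I (I (V 27) (V 15)) (V 2))).
Lemma D2_c48 : cd D2_F1 D2_F47 D2_F48.
Proof.
  apply (cd_intro (I (V 0) (V 1)) (I (I (V 1) (V 2)) (I (V 0) (V 2))) D2_F47 3 (I (I (V 27) (V 15)) (I (V 15) (V 15))) [(0, (I (V 27) (V 15))); (1, (I (V 15) (V 15)))] (fun v => v) D2_F48).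
  - reflexivity.
  - vm_compute; reflexivity.
  - vm_compute; reflexivity.
  - mgu_tac.
  - exact id_inj.
  - vm_compute; reflexivity.
Qed.
Definition D2_F49 : form := (I (I (V 27) (I (V 32) (V 31))) (I (V 31) (I (V 32) (V 31)))).
Lemma D2_c49 : cd D2_F48 D2_F3 D2_F49.
Proof.
  apply (cd_intro (I (I (V 15) (V 15)) (V 2)) (I (I (V 27) (V 15)) (V 2)) D2_F3 28 (I (I (I (V 32) (V 31)) (V 30)) (I (V 31) (V 30))) [(2, (I (V 31) (I (V 32) (V 31)))); (15, (I (V 32) (V 31))); (30, (I (V 32) (V 31)))] (fun v => v) D2_F49).
  - reflexivity.
  - vm_compute; reflexivity.
  - vm_compute; reflexivity.
  - mgu_tac.
  - exact id_inj.
  - vm_compute; reflexivity.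
Qed.
Definition D2_F50 : form := (I (V 103) (I (V 102) (I (V 103) (V 102)))).
Lemma D2_c50 : cd D2_F31 D2_F49 D2_F50.
Proof.
  apply (cd_intro (I (I (N (V 70)) (I (V 70) (V 69))) (V 2)) (I (V 70) (V 2)) D2_F49 71 (I (I (V 98) (I (V 103) (V 102))) (I (V 102) (I (V 103) (V 102)))) [(2, (I (V 102) (I (V 103) (V 102)))); (69, (V 102)); (70, (V 103)); (98, (N (V 103)))] (fun v => v) D2_F50).
  - reflexivity.
  - vm_compute; reflexivity.
  - vm_compute; reflexivity.
  - mgu_tac.
  - exact id_inj.
  - vm_compute; reflexivity.
Qed.
Definition D2_F51 : form := (I (I (I (V 105) (I (V 106) (V 105))) (V 2)) (I (V 106) (V 2))).
Lemma D2_c51 : cd D2_F1 D2_F50 D2_F51.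
Proof.
  apply (cd_intro (I (V 0) (V 1)) (I (I (V 1) (V 2)) (I (V 0) (V 2))) D2_F50 3 (I (V 106) (I (V 105) (I (V 106) (V 105)))) [(0, (V 106)); (1, (I (V 105) (I (V 106) (V 105))))] (fun v => v) D2_F51).
  - reflexivity.
  - vm_compute; reflexivity.
  - vm_compute; reflexivity.
  - mgu_tac.
  - exact id_inj.
  - vm_compute; reflexivity.
Qed.
Definition D2_F52 : form := (I (I (V 202) (I (V 203) (V 202))) (I (V 203) (I (V 96) (V 96)))).
Lemma D2_c52 : cd D2_F46 D2_F51 D2_F52.
Proof.
  apply (cd_intro (I (I (V 90) (I (V 96) (V 96))) (V 2)) (I (V 90) (V 2)) D2_F51 97 (I (I (I (V 202) (I (V 203) (V 202))) (V 99)) (I (V 203) (V 99))) [(2, (I (V 203) (I (V 96) (V 96)))); (90, (I (V 202) (I (V 203) (V 202)))); (99, (I (V 96) (V 96)))] (fun v => v) D2_F52).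
  - reflexivity.
  - vm_compute; reflexivity.
  - vm_compute; reflexivity.
  - mgu_tac.
  - exact id_inj.
  - vm_compute; reflexivity.
Qed.
Definition D2_F53 : form := (I (V 106) (I (I (I (V 106) (V 107)) (V 109)) (I (V 107) (V 109)))).
Lemma D2_c53 : cd D2_F51 D2_F1 D2_F53.
Proof.
  apply (cd_intro (I (I (V 105) (I (V 106) (V 105))) (V 2)) (I (V 106) (V 2)) D2_F1 107 (I (I (V 107) (V 108)) (I (I (V 108) (V 109)) (I (V 107) (V 109)))) [(2, (I (I (I (V 106) (V 107)) (V 109)) (I (V 107) (V 109)))); (105, (V 107)); (108, (I (V 106) (V 107)))] (fun v => v) D2_F53).
  - reflexivity.
  - vm_compute; reflexivity.
  - vm_compute; reflexivity.
  - mgu_tac.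
  - exact id_inj.
  - vm_compute; reflexivity.
Qed.
Definition D2_F54 : form := (I (I (I (I (V 311) (V 313)) (V 311)) (V 313)) (I (V 96) (V 96))).
Lemma D2_c54 : cd D2_F52 D2_F53 D2_F54.
Proof.
  apply (cd_intro (I (V 202) (I (V 203) (V 202))) (I (V 203) (I (V 96) (V 96))) D2_F53 204 (I (V 310) (I (I (I (V 310) (V 311)) (V 313)) (I (V 311) (V 313)))) [(202, (I (V 311) (V 313))); (203, (I (I (I (V 311) (V 313)) (V 311)) (V 313))); (310, (I (V 311) (V 313)))] (fun v => v) D2_F54).
  - reflexivity.
  - vm_compute; reflexivity.
  - vm_compute; reflexivity.
  - mgu_tac.
  - exact id_inj.
  - vm_compute; reflexivity.
Qed.
Definition D2_F55 : form := (I (N (I (I (V 321) (V 323)) (V 321))) (I (V 106) (V 106))).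
Lemma D2_c55 : cd D2_F20 D2_F54 D2_F55.
Proof.
  apply (cd_intro (I (I (V 9) (V 8)) (V 2)) (I (N (V 9)) (V 2)) D2_F54 10 (I (I (I (I (V 321) (V 323)) (V 321)) (V 323)) (I (V 106) (V 106))) [(2, (I (V 106) (V 106))); (8, (V 323)); (9, (I (I (V 321) (V 323)) (V 321)))] (fun v => v) D2_F55).
  - reflexivity.
  - vm_compute; reflexivity.
  - vm_compute; reflexivity.
  - mgu_tac.
  - exact id_inj.
  - vm_compute; reflexivity.
Qed.
Definition D2_F56 : form := (I (I (I (V 416) (V 418)) (V 416)) (I (I (V 416) (V 418)) (V 416))).
Lemma D2_c56 : cd D2_F43 D2_F55 D2_F56.
Proof.
  apply (cd_intro (I (N (V 94)) (I (V 94) (V 94))) (I (V 94) (V 94)) D2_F55 95 (I (N (I (I (V 416) (V 418)) (V 416))) (I (V 201) (V 201))) [(94, (I (I (V 416) (V 418)) (V 416))); (201, (I (I (V 416) (V 418)) (V 416)))] (fun v => v) D2_F56).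
  - reflexivity.
  - vm_compute; reflexivity.
  - vm_compute; reflexivity.
  - mgu_tac.
  - exact id_inj.
  - vm_compute; reflexivity.
Qed.
Definition D2_F57 : form := (I (V 421) (I (I (V 421) (V 423)) (V 421))).
Lemma D2_c57 : cd D2_F3 D2_F56 D2_F57.
Proof.
  apply (cd_intro (I (I (V 4) (V 3)) (V 2)) (I (V 3) (V 2)) D2_F56 5 (I (I (I (V 421) (V 423)) (V 421)) (I (I (V 421) (V 423)) (V 421))) [(2, (I (I (V 421) (V 423)) (V 421))); (3, (V 421)); (4, (I (V 421) (V 423)))] (fun v => v) D2_F57).
  - reflexivity.
  - vm_compute; reflexivity.
  - vm_compute; reflexivity.
  - mgu_tac.
  - exact id_inj.
  - vm_compute; reflexivity.
Qed.
Definition D2_F58 : form := (I (I (I (I (V 424) (V 426)) (V 424)) (V 2)) (I (V 424) (V 2))).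
Lemma D2_c58 : cd D2_F1 D2_F57 D2_F58.
Proof.
  apply (cd_intro (I (V 0) (V 1)) (I (I (V 1) (V 2)) (I (V 0) (V 2))) D2_F57 3 (I (V 424) (I (I (V 424) (V 426)) (V 424))) [(0, (V 424)); (1, (I (I (V 424) (V 426)) (V 424)))] (fun v => v) D2_F58).
  - reflexivity.
  - vm_compute; reflexivity.
  - vm_compute; reflexivity.
  - mgu_tac.
  - exact id_inj.
  - vm_compute; reflexivity.
Qed.
Definition D2_F59 : form := (I (I (V 12) (V 436)) (I (V 12) (V 12))).
Lemma D2_c59 : cd D2_F24 D2_F58 D2_F59.
Proof.
  apply (cd_intro (I (I (I (V 9) (V 8)) (V 8)) (V 2)) (I (V 9) (V 2)) D2_F58 10 (I (I (I (I (V 434) (V 436)) (V 434)) (V 12)) (I (V 434) (V 12))) [(2, (I (V 12) (V 12))); (8, (V 12)); (9, (I (V 12) (V 436))); (434, (V 12))] (fun v => v) D2_F59).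
  - reflexivity.
  - vm_compute; reflexivity.
  - vm_compute; reflexivity.
  - mgu_tac.
  - exact id_inj.
  - vm_compute; reflexivity.
Qed.
Definition D2_F60 : form := (I (I (V 98) (V 522)) (I (I (V 98) (V 522)) (I (V 98) (V 98)))).
Lemma D2_c60 : cd D2_F32 D2_F59 D2_F60.
Proof.
  apply (cd_intro (I (V 85) (V 84)) (I (V 85) (I (V 85) (V 84))) D2_F59 86 (I (I (V 98) (V 522)) (I (V 98) (V 98))) [(84, (I (V 98) (V 98))); (85, (I (V 98) (V 522)))] (fun v => v) D2_F60).
  - reflexivity.
  - vm_compute; reflexivity.
  - vm_compute; reflexivity.
  - mgu_tac.
  - exact id_inj.
  - vm_compute; reflexivity.
Qed.
Definition D2_F61 : form := (I (I (V 524) (I (V 525) (I (V 526) (V 525)))) (I (V 524) (V 524))).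
Lemma D2_c61 : cd D2_F60 D2_F5 D2_F61.
Proof.
  apply (cd_intro (I (V 98) (V 522)) (I (I (V 98) (V 522)) (I (V 98) (V 98))) D2_F5 523 (I (V 524) (I (V 525) (I (V 526) (V 525)))) [(98, (V 524)); (522, (I (V 525) (I (V 526) (V 525))))] (fun v => v) D2_F61).
  - reflexivity.
  - vm_compute; reflexivity.
  - vm_compute; reflexivity.
  - mgu_tac.
  - exact id_inj.
  - vm_compute; reflexivity.
Qed.
Definition D2_F62 : form := (I (I (V 580) (V 579)) (I (N (V 579)) (N (V 579)))).
Lemma D2_c62 : cd D2_F23 D2_F61 D2_F62.
Proof.
  apply (cd_intro (I (I (N (V 53)) (I (V 53) (V 52))) (V 2)) (I (V 52) (V 2)) D2_F61 54 (I (I (V 578) (I (V 579) (I (V 580) (V 579)))) (I (V 578) (V 578))) [(2, (I (N (V 579)) (N (V 579)))); (52, (I (V 580) (V 579))); (53, (V 579)); (578, (N (V 579)))] (fun v => v) D2_F62).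
  - reflexivity.
  - vm_compute; reflexivity.
  - vm_compute; reflexivity.
  - mgu_tac.
  - exact id_inj.
  - vm_compute; reflexivity.
Qed.
Definition D2_F63 : form := (I (I (V 0) (V 0)) (I (N (V 0)) (N (V 0)))).
Lemma D2_c63 : cd D2_F15 D2_F62 D2_F63.
Proof.
  apply (cd_intro (I (I (V 41) (V 41)) (V 35)) (I (I (V 41) (V 41)) (V 35)) D2_F62 42 (I (I (V 622) (V 621)) (I (N (V 621)) (N (V 621)))) [(35, (I (N (V 621)) (N (V 621)))); (41, (V 621)); (622, (V 621))] (fun v => swap 621 0 ((fun v => v) v)) D2_F63).
  - reflexivity.
  - vm_compute; reflexivity.
  - vm_compute; reflexivity.
  - mgu_tac.
  - exact (comp_inj _ _ id_inj (swap_inj 621 0)).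
  - vm_compute; reflexivity.
Qed.
Definition D2_pf : list (form * just) := [(D2_F0, Ax); (D2_F1, Ax); (D2_F2, Ax); (D2_F3, CD 1 2); (D2_F4, CD 3 0); (D2_F5, CD 2 2); (D2_F6, CD 0 5); (D2_F7, CD 3 6); (D2_F8, CD 4 7); (D2_F9, CD 0 8); (D2_F10, CD 3 2); (D2_F11, CD 10 7); (D2_F12, CD 9 11); (D2_F13, CD 3 1); (D2_F14, CD 13 7); (D2_F15, CD 12 14); (D2_F16, CD 3 12); (D2_F17, CD 1 16); (D2_F18, Ax); (D2_F19, CD 3 18); (D2_F20, CD 1 19); (D2_F21, CD 17 20); (D2_F22, CD 3 21); (D2_F23, CD 1 22); (D2_F24, CD 1 4); (D2_F25, CD 24 0); (D2_F26, CD 1 25); (D2_F27, CD 17 3); (D2_F28, CD 24 20); (D2_F29, CD 27 28); (D2_F30, CD 29 19); (D2_F31, CD 1 30); (D2_F32, CD 26 31); (D2_F33, CD 24 2); (D2_F34, CD 9 33); (D2_F35, CD 20 8); (D2_F36, CD 1 35); (D2_F37, CD 15 36); (D2_F38, CD 2 19); (D2_F39, CD 0 38); (D2_F40, CD 20 39); (D2_F41, CD 37 40); (D2_F42, CD 18 41); (D2_F43, CD 34 42); (D2_F44, CD 2 7); (D2_F45, CD 32 44); (D2_F46, CD 1 45); (D2_F47, CD 24 26); (D2_F48, CD 1 47); (D2_F49, CD 48 3); (D2_F50, CD 31 49); (D2_F51, CD 1 50); (D2_F52, CD 46 51); (D2_F53, CD 51 1); (D2_F54, CD 52 53); (D2_F55,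 CD 20 54); (D2_F56, CD 43 55); (D2_F57, CD 3 56); (D2_F58, CD 1 57); (D2_F59, CD 24 58); (D2_F60, CD 32 59); (D2_F61, CD 60 5); (D2_F62, CD 23 61); (D2_F63, CD 15 62)].
Lemma D2_valid : forall k, k < length D2_pf -> valid_line D2_pf k.
Proof.
  intros k Hk.
  destruct k as [|k]; [exact (vl_ax D2_pf 0 D2_F0 A3 eq_refl ltac:(unfold axioms; simpl; tauto) (variant_refl _))|].
  destruct k as [|k]; [exact (vl_ax D2_pf 1 D2_F1 A2 eq_refl ltac:(unfold axioms; simpl; tauto) (variant_refl _))|].
  destruct k as [|k]; [exact (vl_ax D2_pf 2 D2_F2 A1 eq_refl ltac:(unfold axioms; simpl; tauto) (variant_refl _))|].
  destruct k as [|k]; [exact (vl_cd D2_pf 3 D2_F3 1 2 D2_F1 D2_F2 eq_refl ltac:(lia) ltac:(lia) eq_refl eq_refl D2_c3)|].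
  destruct k as [|k]; [exact (vl_cd D2_pf 4 D2_F4 3 0 D2_F3 D2_F0 eq_refl ltac:(lia) ltac:(lia) eq_refl eq_refl D2_c4)|].
  destruct k as [|k]; [exact (vl_cd D2_pf 5 D2_F5 2 2 D2_F2 D2_F2 eq_refl ltac:(lia) ltac:(lia) eq_refl eq_refl D2_c5)|].
  destruct k as [|k]; [exact (vl_cd D2_pf 6 D2_F6 0 5 D2_F0 D2_F5 eq_refl ltac:(lia) ltac:(lia) eq_refl eq_refl D2_c6)|].
  destruct k as [|k]; [exact (vl_cd D2_pf 7 D2_F7 3 6 D2_F3 D2_F6 eq_refl ltac:(lia) ltac:(lia) eq_refl eq_refl D2_c7)|].
  destruct k as [|k]; [exact (vl_cd D2_pf 8 D2_F8 4 7 D2_F4 D2_F7 eq_refl ltac:(lia) ltac:(lia) eq_refl eq_refl D2_c8)|].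
  destruct k as [|k]; [exact (vl_cd D2_pf 9 D2_F9 0 8 D2_F0 D2_F8 eq_refl ltac:(lia) ltac:(lia) eq_refl eq_refl D2_c9)|].
  destruct k as [|k]; [exact (vl_cd D2_pf 10 D2_F10 3 2 D2_F3 D2_F2 eq_refl ltac:(lia) ltac:(lia) eq_refl eq_refl D2_c10)|].
  destruct k as [|k]; [exact (vl_cd D2_pf 11 D2_F11 10 7 D2_F10 D2_F7 eq_refl ltac:(lia) ltac:(lia) eq_refl eq_refl D2_c11)|].
  destruct k as [|k]; [exact (vl_cd D2_pf 12 D2_F12 9 11 D2_F9 D2_F11 eq_refl ltac:(lia) ltac:(lia) eq_refl eq_refl D2_c12)|].
  destruct k as [|k]; [exact (vl_cd D2_pf 13 D2_F13 3 1 D2_F3 D2_F1 eq_refl ltac:(lia) ltac:(lia) eq_refl eq_refl D2_c13)|].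
  destruct k as [|k]; [exact (vl_cd D2_pf 14 D2_F14 13 7 D2_F13 D2_F7 eq_refl ltac:(lia) ltac:(lia) eq_refl eq_refl D2_c14)|].
  destruct k as [|k]; [exact (vl_cd D2_pf 15 D2_F15 12 14 D2_F12 D2_F14 eq_refl ltac:(lia) ltac:(lia) eq_refl eq_refl D2_c15)|].
  destruct k as [|k]; [exact (vl_cd D2_pf 16 D2_F16 3 12 D2_F3 D2_F12 eq_refl ltac:(lia) ltac:(lia) eq_refl eq_refl D2_c16)|].
  destruct k as [|k]; [exact (vl_cd D2_pf 17 D2_F17 1 16 D2_F1 D2_F16 eq_refl ltac:(lia) ltac:(lia) eq_refl eq_refl D2_c17)|].
  destruct k as [|k]; [exact (vl_ax D2_pf 18 D2_F18 A4 eq_refl ltac:(unfold axioms; simpl; tauto) (variant_refl _))|].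
  destruct k as [|k]; [exact (vl_cd D2_pf 19 D2_F19 3 18 D2_F3 D2_F18 eq_refl ltac:(lia) ltac:(lia) eq_refl eq_refl D2_c19)|].
  destruct k as [|k]; [exact (vl_cd D2_pf 20 D2_F20 1 19 D2_F1 D2_F19 eq_refl ltac:(lia) ltac:(lia) eq_refl eq_refl D2_c20)|].
  destruct k as [|k]; [exact (vl_cd D2_pf 21 D2_F21 17 20 D2_F17 D2_F20 eq_refl ltac:(lia) ltac:(lia) eq_refl eq_refl D2_c21)|].
  destruct k as [|k]; [exact (vl_cd D2_pf 22 D2_F22 3 21 D2_F3 D2_F21 eq_refl ltac:(lia) ltac:(lia) eq_refl eq_refl D2_c22)|].
  destruct k as [|k]; [exact (vl_cd D2_pf 23 D2_F23 1 22 D2_F1 D2_F22 eq_refl ltac:(lia) ltac:(lia) eq_refl eq_refl D2_c23)|].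
  destruct k as [|k]; [exact (vl_cd D2_pf 24 D2_F24 1 4 D2_F1 D2_F4 eq_refl ltac:(lia) ltac:(lia) eq_refl eq_refl D2_c24)|].
  destruct k as [|k]; [exact (vl_cd D2_pf 25 D2_F25 24 0 D2_F24 D2_F0 eq_refl ltac:(lia) ltac:(lia) eq_refl eq_refl D2_c25)|].
  destruct k as [|k]; [exact (vl_cd D2_pf 26 D2_F26 1 25 D2_F1 D2_F25 eq_refl ltac:(lia) ltac:(lia) eq_refl eq_refl D2_c26)|].
  destruct k as [|k]; [exact (vl_cd D2_pf 27 D2_F27 17 3 D2_F17 D2_F3 eq_refl ltac:(lia) ltac:(lia) eq_refl eq_refl D2_c27)|].
  destruct k as [|k]; [exact (vl_cd D2_pf 28 D2_F28 24 20 D2_F24 D2_F20 eq_refl ltac:(lia) ltac:(lia) eq_refl eq_refl D2_c28)|].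
  destruct k as [|k]; [exact (vl_cd D2_pf 29 D2_F29 27 28 D2_F27 D2_F28 eq_refl ltac:(lia) ltac:(lia) eq_refl eq_refl D2_c29)|].
  destruct k as [|k]; [exact (vl_cd D2_pf 30 D2_F30 29 19 D2_F29 D2_F19 eq_refl ltac:(lia) ltac:(lia) eq_refl eq_refl D2_c30)|].
  destruct k as [|k]; [exact (vl_cd D2_pf 31 D2_F31 1 30 D2_F1 D2_F30 eq_refl ltac:(lia) ltac:(lia) eq_refl eq_refl D2_c31)|].
  destruct k as [|k]; [exact (vl_cd D2_pf 32 D2_F32 26 31 D2_F26 D2_F31 eq_refl ltac:(lia) ltac:(lia) eq_refl eq_refl D2_c32)|].
  destruct k as [|k]; [exact (vl_cd D2_pf 33 D2_F33 24 2 D2_F24 D2_F2 eq_refl ltac:(lia) ltac:(lia) eq_refl eq_refl D2_c33)|].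
  destruct k as [|k]; [exact (vl_cd D2_pf 34 D2_F34 9 33 D2_F9 D2_F33 eq_refl ltac:(lia) ltac:(lia) eq_refl eq_refl D2_c34)|].
  destruct k as [|k]; [exact (vl_cd D2_pf 35 D2_F35 20 8 D2_F20 D2_F8 eq_refl ltac:(lia) ltac:(lia) eq_refl eq_refl D2_c35)|].
  destruct k as [|k]; [exact (vl_cd D2_pf 36 D2_F36 1 35 D2_F1 D2_F35 eq_refl ltac:(lia) ltac:(lia) eq_refl eq_refl D2_c36)|].
  destruct k as [|k]; [exact (vl_cd D2_pf 37 D2_F37 15 36 D2_F15 D2_F36 eq_refl ltac:(lia) ltac:(lia) eq_refl eq_refl D2_c37)|].
  destruct k as [|k]; [exact (vl_cd D2_pf 38 D2_F38 2 19 D2_F2 D2_F19 eq_refl ltac:(lia) ltac:(lia) eq_refl eq_refl D2_c38)|].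
  destruct k as [|k]; [exact (vl_cd D2_pf 39 D2_F39 0 38 D2_F0 D2_F38 eq_refl ltac:(lia) ltac:(lia) eq_refl eq_refl D2_c39)|].
  destruct k as [|k]; [exact (vl_cd D2_pf 40 D2_F40 20 39 D2_F20 D2_F39 eq_refl ltac:(lia) ltac:(lia) eq_refl eq_refl D2_c40)|].
  destruct k as [|k]; [exact (vl_cd D2_pf 41 D2_F41 37 40 D2_F37 D2_F40 eq_refl ltac:(lia) ltac:(lia) eq_refl eq_refl D2_c41)|].
  destruct k as [|k]; [exact (vl_cd D2_pf 42 D2_F42 18 41 D2_F18 D2_F41 eq_refl ltac:(lia) ltac:(lia) eq_refl eq_refl D2_c42)|].
  destruct k as [|k]; [exact (vl_cd D2_pf 43 D2_F43 34 42 D2_F34 D2_F42 eq_refl ltac:(lia) ltac:(lia) eq_refl eq_refl D2_c43)|].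
  destruct k as [|k]; [exact (vl_cd D2_pf 44 D2_F44 2 7 D2_F2 D2_F7 eq_refl ltac:(lia) ltac:(lia) eq_refl eq_refl D2_c44)|].
  destruct k as [|k]; [exact (vl_cd D2_pf 45 D2_F45 32 44 D2_F32 D2_F44 eq_refl ltac:(lia) ltac:(lia) eq_refl eq_refl D2_c45)|].
  destruct k as [|k]; [exact (vl_cd D2_pf 46 D2_F46 1 45 D2_F1 D2_F45 eq_refl ltac:(lia) ltac:(lia) eq_refl eq_refl D2_c46)|].
  destruct k as [|k]; [exact (vl_cd D2_pf 47 D2_F47 24 26 D2_F24 D2_F26 eq_refl ltac:(lia) ltac:(lia) eq_refl eq_refl D2_c47)|].
  destruct k as [|k]; [exact (vl_cd D2_pf 48 D2_F48 1 47 D2_F1 D2_F47 eq_refl ltac:(lia) ltac:(lia) eq_refl eq_refl D2_c48)|].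
  destruct k as [|k]; [exact (vl_cd D2_pf 49 D2_F49 48 3 D2_F48 D2_F3 eq_refl ltac:(lia) ltac:(lia) eq_refl eq_refl D2_c49)|].
  destruct k as [|k]; [exact (vl_cd D2_pf 50 D2_F50 31 49 D2_F31 D2_F49 eq_refl ltac:(lia) ltac:(lia) eq_refl eq_refl D2_c50)|].
  destruct k as [|k]; [exact (vl_cd D2_pf 51 D2_F51 1 50 D2_F1 D2_F50 eq_refl ltac:(lia) ltac:(lia) eq_refl eq_refl D2_c51)|].
  destruct k as [|k]; [exact (vl_cd D2_pf 52 D2_F52 46 51 D2_F46 D2_F51 eq_refl ltac:(lia) ltac:(lia) eq_refl eq_refl D2_c52)|].
  destruct k as [|k]; [exact (vl_cd D2_pf 53 D2_F53 51 1 D2_F51 D2_F1 eq_refl ltac:(lia) ltac:(lia) eq_refl eq_refl D2_c53)|].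
  destruct k as [|k]; [exact (vl_cd D2_pf 54 D2_F54 52 53 D2_F52 D2_F53 eq_refl ltac:(lia) ltac:(lia) eq_refl eq_refl D2_c54)|].
  destruct k as [|k]; [exact (vl_cd D2_pf 55 D2_F55 20 54 D2_F20 D2_F54 eq_refl ltac:(lia) ltac:(lia) eq_refl eq_refl D2_c55)|].
  destruct k as [|k]; [exact (vl_cd D2_pf 56 D2_F56 43 55 D2_F43 D2_F55 eq_refl ltac:(lia) ltac:(lia) eq_refl eq_refl D2_c56)|].
  destruct k as [|k]; [exact (vl_cd D2_pf 57 D2_F57 3 56 D2_F3 D2_F56 eq_refl ltac:(lia) ltac:(lia) eq_refl eq_refl D2_c57)|].
  destruct k as [|k]; [exact (vl_cd D2_pf 58 D2_F58 1 57 D2_F1 D2_F57 eq_refl ltac:(lia) ltac:(lia) eq_refl eq_refl D2_c58)|].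
  destruct k as [|k]; [exact (vl_cd D2_pf 59 D2_F59 24 58 D2_F24 D2_F58 eq_refl ltac:(lia) ltac:(lia) eq_refl eq_refl D2_c59)|].
  destruct k as [|k]; [exact (vl_cd D2_pf 60 D2_F60 32 59 D2_F32 D2_F59 eq_refl ltac:(lia) ltac:(lia) eq_refl eq_refl D2_c60)|].
  destruct k as [|k]; [exact (vl_cd D2_pf 61 D2_F61 60 5 D2_F60 D2_F5 eq_refl ltac:(lia) ltac:(lia) eq_refl eq_refl D2_c61)|].
  destruct k as [|k]; [exact (vl_cd D2_pf 62 D2_F62 23 61 D2_F23 D2_F61 eq_refl ltac:(lia) ltac:(lia) eq_refl eq_refl D2_c62)|].
  destruct k as [|k]; [exact (vl_cd D2_pf 63 D2_F63 15 62 D2_F15 D2_F62 eq_refl ltac:(lia) ltac:(lia) eq_refl eq_refl D2_c63)|].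
  exfalso; simpl in Hk; lia.
Qed.
Lemma D2_proof : cd_proof D2_pf D2 /\ dn_free D2_pf.
Proof.
  split; [split; [discriminate | split; [exact D2_valid | reflexivity]] | apply dnb_ok; vm_compute; reflexivity].
Qed.

Definition D3_F0 : form := (I (I (V 0) (V 1)) (I (I (V 1) (V 2)) (I (V 0) (V 2)))).
Definition D3_F1 : form := (I (I (I (I (V 4) (V 5)) (I (V 3) (V 5))) (V 2)) (I (I (V 3) (V 4)) (V 2))).
Lemma D3_c1 : cd D3_F0 D3_F0 D3_F1.
Proof.
  apply (cd_intro (I (V 0) (V 1)) (I (I (V 1) (V 2)) (I (V 0) (V 2))) D3_F0 3 (I (I (V 3) (V 4)) (I (I (V 4) (V 5)) (I (V 3) (V 5)))) [(0, (I (V 3) (V 4))); (1, (I (I (V 4) (V 5)) (I (V 3) (V 5))))] (fun v => v) D3_F1).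
  - reflexivity.
  - vm_compute; reflexivity.
  - vm_compute; reflexivity.
  - mgu_tac.
  - exact id_inj.
  - vm_compute; reflexivity.
Qed.
Definition D3_F2 : form := (I (V 0) (I (V 1) (V 0))).
Definition D3_F3 : form := (I (I (I (V 4) (V 3)) (V 2)) (I (V 3) (V 2))).
Lemma D3_c3 : cd D3_F0 D3_F2 D3_F3.
Proof.
  apply (cd_intro (I (V 0) (V 1)) (I (I (V 1) (V 2)) (I (V 0) (V 2))) D3_F2 3 (I (V 3) (I (V 4) (V 3))) [(0, (V 3)); (1, (I (V 4) (V 3)))] (fun v => v) D3_F3).
  - reflexivity.
  - vm_compute; reflexivity.
  - vm_compute; reflexivity.
  - mgu_tac.
  - exact id_inj.
  - vm_compute; reflexivity.
Qed.
Definition D3_F4 : form := (I (I (I (V 0) (V 1)) (V 1)) (I (I (V 1) (V 0)) (V 0))).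
Definition D3_F5 : form := (I (V 6) (I (I (V 6) (V 5)) (V 5))).
Lemma D3_c5 : cd D3_F3 D3_F4 D3_F5.
Proof.
  apply (cd_intro (I (I (V 4) (V 3)) (V 2)) (I (V 3) (V 2)) D3_F4 5 (I (I (I (V 5) (V 6)) (V 6)) (I (I (V 6) (V 5)) (V 5))) [(2, (I (I (V 6) (V 5)) (V 5))); (3, (V 6)); (4, (I (V 5) (V 6)))] (fun v => v) D3_F5).
  - reflexivity.
  - vm_compute; reflexivity.
  - vm_compute; reflexivity.
  - mgu_tac.
  - exact id_inj.
  - vm_compute; reflexivity.
Qed.
Definition D3_F6 : form := (I (I (I (I (V 9) (V 8)) (V 8)) (V 2)) (I (V 9) (V 2))).
Lemma D3_c6 : cd D3_F0 D3_F5 D3_F6.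
Proof.
  apply (cd_intro (I (V 0) (V 1)) (I (I (V 1) (V 2)) (I (V 0) (V 2))) D3_F5 3 (I (V 9) (I (I (V 9) (V 8)) (V 8))) [(0, (V 9)); (1, (I (I (V 9) (V 8)) (V 8)))] (fun v => v) D3_F6).
  - reflexivity.
  - vm_compute; reflexivity.
  - vm_compute; reflexivity.
  - mgu_tac.
  - exact id_inj.
  - vm_compute; reflexivity.
Qed.
Definition D3_F7 : form := (I (I (V 3) (I (V 15) (V 14))) (I (V 15) (I (V 3) (V 14)))).
Lemma D3_c7 : cd D3_F1 D3_F6 D3_F7.
Proof.
  apply (cd_intro (I (I (I (V 4) (V 5)) (I (V 3) (V 5))) (V 2)) (I (I (V 3) (V 4)) (V 2)) D3_F6 6 (I (I (I (I (V 15) (V 14)) (V 14)) (V 8)) (I (V 15) (V 8))) [(2, (I (V 15) (I (V 3) (V 14)))); (4, (I (V 15) (V 14))); (5, (V 14)); (8, (I (V 3) (V 14)))] (fun v => v) D3_F7).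
  - reflexivity.
  - vm_compute; reflexivity.
  - vm_compute; reflexivity.
  - mgu_tac.
  - exact id_inj.
  - vm_compute; reflexivity.
Qed.
Definition D3_F8 : form := (I (I (V 17) (V 18)) (I (I (V 16) (V 17)) (I (V 16) (V 18)))).
Lemma D3_c8 : cd D3_F7 D3_F0 D3_F8.
Proof.
  apply (cd_intro (I (V 3) (I (V 15) (V 14))) (I (V 15) (I (V 3) (V 14))) D3_F0 16 (I (I (V 16) (V 17)) (I (I (V 17) (V 18)) (I (V 16) (V 18)))) [(3, (I (V 16) (V 17))); (14, (I (V 16) (V 18))); (15, (I (V 17) (V 18)))] (fun v => v) D3_F8).
  - reflexivity.
  - vm_compute; reflexivity.
  - vm_compute; reflexivity.
  - mgu_tac.
  - exact id_inj.
  - vm_compute; reflexivity.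
Qed.
Definition D3_F9 : form := (I (I (V 16) (I (V 22) (I (V 34) (V 33)))) (I (V 16) (I (V 34) (I (V 22) (V 33))))).
Lemma D3_c9 : cd D3_F8 D3_F7 D3_F9.
Proof.
  apply (cd_intro (I (V 17) (V 18)) (I (I (V 16) (V 17)) (I (V 16) (V 18))) D3_F7 19 (I (I (V 22) (I (V 34) (V 33))) (I (V 34) (I (V 22) (V 33)))) [(17, (I (V 22) (I (V 34) (V 33)))); (18, (I (V 34) (I (V 22) (V 33))))] (fun v => v) D3_F9).
  - reflexivity.
  - vm_compute; reflexivity.
  - vm_compute; reflexivity.
  - mgu_tac.
  - exact id_inj.
  - vm_compute; reflexivity.
Qed.
Definition D3_F10 : form := (I (V 1) (I (V 2) (I (V 3) (V 2)))).
Lemma D3_c10 : cd D3_F2 D3_F2 D3_F10.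
Proof.
  apply (cd_intro (V 0) (I (V 1) (V 0)) D3_F2 2 (I (V 2) (I (V 3) (V 2))) [(0, (I (V 2) (I (V 3) (V 2))))] (fun v => v) D3_F10).
  - reflexivity.
  - vm_compute; reflexivity.
  - vm_compute; reflexivity.
  - mgu_tac.
  - exact id_inj.
  - vm_compute; reflexivity.
Qed.
Definition D3_F11 : form := (I (I (I (V 4) (I (V 5) (V 4))) (V 0)) (V 0)).
Lemma D3_c11 : cd D3_F4 D3_F10 D3_F11.
Proof.
  apply (cd_intro (I (I (V 0) (V 1)) (V 1)) (I (I (V 1) (V 0)) (V 0)) D3_F10 2 (I (V 3) (I (V 4) (I (V 5) (V 4)))) [(1, (I (V 4) (I (V 5) (V 4)))); (3, (I (V 0) (I (V 4) (I (V 5) (V 4)))))] (fun v => v) D3_F11).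
  - reflexivity.
  - vm_compute; reflexivity.
  - vm_compute; reflexivity.
  - mgu_tac.
  - exact id_inj.
  - vm_compute; reflexivity.
Qed.
Definition D3_F12 : form := (I (V 5) (V 5)).
Lemma D3_c12 : cd D3_F3 D3_F11 D3_F12.
Proof.
  apply (cd_intro (I (I (V 4) (V 3)) (V 2)) (I (V 3) (V 2)) D3_F11 5 (I (I (I (V 9) (I (V 10) (V 9))) (V 5)) (V 5)) [(2, (V 5)); (3, (V 5)); (4, (I (V 9) (I (V 10) (V 9))))] (fun v => v) D3_F12).
  - reflexivity.
  - vm_compute; reflexivity.
  - vm_compute; reflexivity.
  - mgu_tac.
  - exact id_inj.
  - vm_compute; reflexivity.
Qed.
Definition D3_F13 : form := (I (I (I (V 12) (V 12)) (V 5)) (V 5)).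
Lemma D3_c13 : cd D3_F5 D3_F12 D3_F13.
Proof.
  apply (cd_intro (V 6) (I (I (V 6) (V 5)) (V 5)) D3_F12 7 (I (V 12) (V 12)) [(6, (I (V 12) (V 12)))] (fun v => v) D3_F13).
  - reflexivity.
  - vm_compute; reflexivity.
  - vm_compute; reflexivity.
  - mgu_tac.
  - exact id_inj.
  - vm_compute; reflexivity.
Qed.
Definition D3_F14 : form := (I (I (V 7) (I (V 14) (V 14))) (I (V 14) (V 14))).
Lemma D3_c14 : cd D3_F4 D3_F13 D3_F14.
Proof.
  apply (cd_intro (I (I (V 0) (V 1)) (V 1)) (I (I (V 1) (V 0)) (V 0)) D3_F13 2 (I (I (I (V 14) (V 14)) (V 7)) (V 7)) [(0, (I (V 14) (V 14))); (1, (V 7))] (fun v => v) D3_F14).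
  - reflexivity.
  - vm_compute; reflexivity.
  - vm_compute; reflexivity.
  - mgu_tac.
  - exact id_inj.
  - vm_compute; reflexivity.
Qed.
Definition D3_F15 : form := (I (V 9) (I (V 11) (I (I (V 9) (V 8)) (V 8)))).
Lemma D3_c15 : cd D3_F6 D3_F2 D3_F15.
Proof.
  apply (cd_intro (I (I (I (V 9) (V 8)) (V 8)) (V 2)) (I (V 9) (V 2)) D3_F2 10 (I (V 10) (I (V 11) (V 10))) [(2, (I (V 11) (I (I (V 9) (V 8)) (V 8)))); (10, (I (I (V 9) (V 8)) (V 8)))] (fun v => v) D3_F15).
  - reflexivity.
  - vm_compute; reflexivity.
  - vm_compute; reflexivity.
  - mgu_tac.
  - exact id_inj.
  - vm_compute; reflexivity.
Qed.
Definition D3_F16 : form := (I (I (I (V 24) (V 23)) (V 23)) (I (I (V 24) (V 23)) (V 23))).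
Lemma D3_c16 : cd D3_F14 D3_F15 D3_F16.
Proof.
  apply (cd_intro (I (V 7) (I (V 14) (V 14))) (I (V 14) (V 14)) D3_F15 15 (I (V 24) (I (V 26) (I (I (V 24) (V 23)) (V 23)))) [(7, (V 24)); (14, (I (I (V 24) (V 23)) (V 23))); (26, (I (I (V 24) (V 23)) (V 23)))] (fun v => v) D3_F16).
  - reflexivity.
  - vm_compute; reflexivity.
  - vm_compute; reflexivity.
  - mgu_tac.
  - exact id_inj.
  - vm_compute; reflexivity.
Qed.
Definition D3_F17 : form := (I (I (N (V 0)) (N (V 1))) (I (V 1) (V 0))).
Definition D3_F18 : form := (I (V 3) (I (V 6) (I (V 4) (V 3)))).
Lemma D3_c18 : cd D3_F3 D3_F2 D3_F18.
Proof.
  apply (cd_intro (I (I (V 4) (V 3)) (V 2)) (I (V 3) (V 2)) D3_F2 5 (I (V 5) (I (V 6) (V 5))) [(2, (I (V 6) (I (V 4) (V 3)))); (5, (I (V 4) (V 3)))] (fun v => v) D3_F18).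
  - reflexivity.
  - vm_compute; reflexivity.
  - vm_compute; reflexivity.
  - mgu_tac.
  - exact id_inj.
  - vm_compute; reflexivity.
Qed.
Definition D3_F19 : form := (I (V 6) (I (V 4) (I (V 12) (V 12)))).
Lemma D3_c19 : cd D3_F18 D3_F12 D3_F19.
Proof.
  apply (cd_intro (V 3) (I (V 6) (I (V 4) (V 3))) D3_F12 7 (I (V 12) (V 12)) [(3, (I (V 12) (V 12)))] (fun v => v) D3_F19).
  - reflexivity.
  - vm_compute; reflexivity.
  - vm_compute; reflexivity.
  - mgu_tac.
  - exact id_inj.
  - vm_compute; reflexivity.
Qed.
Definition D3_F20 : form := (I (I (V 27) (V 27)) (I (V 27) (V 27))).
Lemma D3_c20 : cd D3_F14 D3_F19 D3_F20.
Proof.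
  apply (cd_intro (I (V 7) (I (V 14) (V 14))) (I (V 14) (V 14)) D3_F19 15 (I (V 21) (I (V 19) (I (V 27) (V 27)))) [(7, (V 21)); (14, (I (V 27) (V 27))); (19, (I (V 27) (V 27)))] (fun v => v) D3_F20).
  - reflexivity.
  - vm_compute; reflexivity.
  - vm_compute; reflexivity.
  - mgu_tac.
  - exact id_inj.
  - vm_compute; reflexivity.
Qed.
Definition D3_F21 : form := (I (V 6) (I (I (V 6) (V 7)) (I (V 5) (V 7)))).
Lemma D3_c21 : cd D3_F3 D3_F0 D3_F21.
Proof.
  apply (cd_intro (I (I (V 4) (V 3)) (V 2)) (I (V 3) (V 2)) D3_F0 5 (I (I (V 5) (V 6)) (I (I (V 6) (V 7)) (I (V 5) (V 7)))) [(2, (I (I (V 6) (V 7)) (I (V 5) (V 7)))); (3, (V 6)); (4, (V 5))] (fun v => v) D3_F21).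
  - reflexivity.
  - vm_compute; reflexivity.
  - vm_compute; reflexivity.
  - mgu_tac.
  - exact id_inj.
  - vm_compute; reflexivity.
Qed.
Definition D3_F22 : form := (I (I (I (V 13) (V 13)) (V 7)) (I (V 5) (V 7))).
Lemma D3_c22 : cd D3_F21 D3_F12 D3_F22.
Proof.
  apply (cd_intro (V 6) (I (I (V 6) (V 7)) (I (V 5) (V 7))) D3_F12 8 (I (V 13) (V 13)) [(6, (I (V 13) (V 13)))] (fun v => v) D3_F22).
  - reflexivity.
  - vm_compute; reflexivity.
  - vm_compute; reflexivity.
  - mgu_tac.
  - exact id_inj.
  - vm_compute; reflexivity.
Qed.
Definition D3_F23 : form := (I (I (I (V 41) (V 41)) (V 35)) (I (I (V 41) (V 41)) (V 35))).
Lemma D3_c23 : cd D3_F20 D3_F22 D3_F23.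
Proof.
  apply (cd_intro (I (V 27) (V 27)) (I (V 27) (V 27)) D3_F22 28 (I (I (I (V 41) (V 41)) (V 35)) (I (V 33) (V 35))) [(27, (I (I (V 41) (V 41)) (V 35))); (33, (I (V 41) (V 41)))] (fun v => v) D3_F23).
  - reflexivity.
  - vm_compute; reflexivity.
  - vm_compute; reflexivity.
  - mgu_tac.
  - exact id_inj.
  - vm_compute; reflexivity.
Qed.
Definition D3_F24 : form := (I (N (V 6)) (I (V 6) (V 5))).
Lemma D3_c24 : cd D3_F3 D3_F17 D3_F24.
Proof.
  apply (cd_intro (I (I (V 4) (V 3)) (V 2)) (I (V 3) (V 2)) D3_F17 5 (I (I (N (V 5)) (N (V 6))) (I (V 6) (V 5))) [(2, (I (V 6) (V 5))); (3, (N (V 6))); (4, (N (V 5)))] (fun v => v) D3_F24).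
  - reflexivity.
  - vm_compute; reflexivity.
  - vm_compute; reflexivity.
  - mgu_tac.
  - exact id_inj.
  - vm_compute; reflexivity.
Qed.
Definition D3_F25 : form := (I (I (I (V 9) (V 8)) (V 2)) (I (N (V 9)) (V 2))).
Lemma D3_c25 : cd D3_F0 D3_F24 D3_F25.
Proof.
  apply (cd_intro (I (V 0) (V 1)) (I (I (V 1) (V 2)) (I (V 0) (V 2))) D3_F24 3 (I (N (V 9)) (I (V 9) (V 8))) [(0, (N (V 9))); (1, (I (V 9) (V 8)))] (fun v => v) D3_F25).
  - reflexivity.
  - vm_compute; reflexivity.
  - vm_compute; reflexivity.
  - mgu_tac.
  - exact id_inj.
  - vm_compute; reflexivity.
Qed.
Definition D3_F26 : form := (I (N (I (V 22) (V 22))) (V 15)).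
Lemma D3_c26 : cd D3_F25 D3_F13 D3_F26.
Proof.
  apply (cd_intro (I (I (V 9) (V 8)) (V 2)) (I (N (V 9)) (V 2)) D3_F13 10 (I (I (I (V 22) (V 22)) (V 15)) (V 15)) [(2, (V 15)); (8, (V 15)); (9, (I (V 22) (V 22)))] (fun v => v) D3_F26).
  - reflexivity.
  - vm_compute; reflexivity.
  - vm_compute; reflexivity.
  - mgu_tac.
  - exact id_inj.
  - vm_compute; reflexivity.
Qed.
Definition D3_F27 : form := (I (I (V 18) (V 2)) (I (N (I (V 25) (V 25))) (V 2))).
Lemma D3_c27 : cd D3_F0 D3_F26 D3_F27.
Proof.
  apply (cd_intro (I (V 0) (V 1)) (I (I (V 1) (V 2)) (I (V 0) (V 2))) D3_F26 3 (I (N (I (V 25) (V 25))) (V 18)) [(0, (N (I (V 25) (V 25)))); (1, (V 18))] (fun v => v) D3_F27).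
  - reflexivity.
  - vm_compute; reflexivity.
  - vm_compute; reflexivity.
  - mgu_tac.
  - exact id_inj.
  - vm_compute; reflexivity.
Qed.
Definition D3_F28 : form := (I (I (V 44) (V 44)) (I (N (I (V 67) (V 67))) (V 44))).
Lemma D3_c28 : cd D3_F23 D3_F27 D3_F28.
Proof.
  apply (cd_intro (I (I (V 41) (V 41)) (V 35)) (I (I (V 41) (V 41)) (V 35)) D3_F27 42 (I (I (V 60) (V 44)) (I (N (I (V 67) (V 67))) (V 44))) [(35, (I (N (I (V 67) (V 67))) (V 44))); (41, (V 44)); (60, (V 44))] (fun v => v) D3_F28).
  - reflexivity.
  - vm_compute; reflexivity.
  - vm_compute; reflexivity.
  - mgu_tac.
  - exact id_inj.
  - vm_compute; reflexivity.
Qed.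
Definition D3_F29 : form := (I (V 1) (I (N (V 8)) (I (V 8) (V 7)))).
Lemma D3_c29 : cd D3_F2 D3_F24 D3_F29.
Proof.
  apply (cd_intro (V 0) (I (V 1) (V 0)) D3_F24 2 (I (N (V 8)) (I (V 8) (V 7))) [(0, (I (N (V 8)) (I (V 8) (V 7))))] (fun v => v) D3_F29).
  - reflexivity.
  - vm_compute; reflexivity.
  - vm_compute; reflexivity.
  - mgu_tac.
  - exact id_inj.
  - vm_compute; reflexivity.
Qed.
Definition D3_F30 : form := (I (I (I (N (V 10)) (I (V 10) (V 9))) (V 0)) (V 0)).
Lemma D3_c30 : cd D3_F4 D3_F29 D3_F30.
Proof.
  apply (cd_intro (I (I (V 0) (V 1)) (V 1)) (I (I (V 1) (V 0)) (V 0)) D3_F29 2 (I (V 3) (I (N (V 10)) (I (V 10) (V 9)))) [(1, (I (N (V 10)) (I (V 10) (V 9)))); (3, (I (V 0) (I (N (V 10)) (I (V 10) (V 9)))))] (fun v => v) D3_F30).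
  - reflexivity.
  - vm_compute; reflexivity.
  - vm_compute; reflexivity.
  - mgu_tac.
  - exact id_inj.
  - vm_compute; reflexivity.
Qed.
Definition D3_F31 : form := (I (N (I (N (V 20)) (I (V 20) (V 19)))) (V 10)).
Lemma D3_c31 : cd D3_F25 D3_F30 D3_F31.
Proof.
  apply (cd_intro (I (I (V 9) (V 8)) (V 2)) (I (N (V 9)) (V 2)) D3_F30 10 (I (I (I (N (V 20)) (I (V 20) (V 19))) (V 10)) (V 10)) [(2, (V 10)); (8, (V 10)); (9, (I (N (V 20)) (I (V 20) (V 19))))] (fun v => v) D3_F31).
  - reflexivity.
  - vm_compute; reflexivity.
  - vm_compute; reflexivity.
  - mgu_tac.
  - exact id_inj.
  - vm_compute; reflexivity.
Qed.
Definition D3_F32 : form := (I (N (I (V 67) (V 67))) (N (I (N (V 88)) (I (V 88) (V 87))))).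
Lemma D3_c32 : cd D3_F28 D3_F31 D3_F32.
Proof.
  apply (cd_intro (I (V 44) (V 44)) (I (N (I (V 67) (V 67))) (V 44)) D3_F31 68 (I (N (I (N (V 88)) (I (V 88) (V 87)))) (V 78)) [(44, (N (I (N (V 88)) (I (V 88) (V 87))))); (78, (N (I (N (V 88)) (I (V 88) (V 87)))))] (fun v => v) D3_F32).
  - reflexivity.
  - vm_compute; reflexivity.
  - vm_compute; reflexivity.
  - mgu_tac.
  - exact id_inj.
  - vm_compute; reflexivity.
Qed.
Definition D3_F33 : form := (I (I (N (V 90)) (I (V 90) (V 89))) (I (V 69) (V 69))).
Lemma D3_c33 : cd D3_F17 D3_F32 D3_F33.
Proof.
  apply (cd_intro (I (N (V 0)) (N (V 1))) (I (V 1) (V 0)) D3_F32 2 (I (N (I (V 69) (V 69))) (N (I (N (V 90)) (I (V 90) (V 89))))) [(0, (I (V 69) (V 69))); (1, (I (N (V 90)) (I (V 90) (V 89))))] (fun v => v) D3_F33).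
  - reflexivity.
  - vm_compute; reflexivity.
  - vm_compute; reflexivity.
  - mgu_tac.
  - exact id_inj.
  - vm_compute; reflexivity.
Qed.
Definition D3_F34 : form := (I (I (N (V 94)) (I (V 94) (V 94))) (I (V 94) (V 94))).
Lemma D3_c34 : cd D3_F16 D3_F33 D3_F34.
Proof.
  apply (cd_intro (I (I (V 24) (V 23)) (V 23)) (I (I (V 24) (V 23)) (V 23)) D3_F33 25 (I (I (N (V 115)) (I (V 115) (V 114))) (I (V 94) (V 94))) [(23, (I (V 94) (V 94))); (24, (N (V 94))); (114, (V 94)); (115, (V 94))] (fun v => v) D3_F34).
  - reflexivity.
  - vm_compute; reflexivity.
  - vm_compute; reflexivity.
  - mgu_tac.
  - exact id_inj.
  - vm_compute; reflexivity.
Qed.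
Definition D3_F35 : form := (I (V 10) (I (I (V 11) (V 10)) (V 10))).
Lemma D3_c35 : cd D3_F6 D3_F4 D3_F35.
Proof.
  apply (cd_intro (I (I (I (V 9) (V 8)) (V 8)) (V 2)) (I (V 9) (V 2)) D3_F4 10 (I (I (I (V 10) (V 11)) (V 11)) (I (I (V 11) (V 10)) (V 10))) [(2, (I (I (V 11) (V 10)) (V 10))); (8, (V 11)); (9, (V 10))] (fun v => v) D3_F35).
  - reflexivity.
  - vm_compute; reflexivity.
  - vm_compute; reflexivity.
  - mgu_tac.
  - exact id_inj.
  - vm_compute; reflexivity.
Qed.
Definition D3_F36 : form := (I (I (I (I (V 14) (V 13)) (V 13)) (V 2)) (I (V 13) (V 2))).
Lemma D3_c36 : cd D3_F0 D3_F35 D3_F36.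
Proof.
  apply (cd_intro (I (V 0) (V 1)) (I (I (V 1) (V 2)) (I (V 0) (V 2))) D3_F35 3 (I (V 13) (I (I (V 14) (V 13)) (V 13))) [(0, (V 13)); (1, (I (I (V 14) (V 13)) (V 13)))] (fun v => v) D3_F36).
  - reflexivity.
  - vm_compute; reflexivity.
  - vm_compute; reflexivity.
  - mgu_tac.
  - exact id_inj.
  - vm_compute; reflexivity.
Qed.
Definition D3_F37 : form := (I (V 32) (I (V 32) (V 32))).
Lemma D3_c37 : cd D3_F3 D3_F20 D3_F37.
Proof.
  apply (cd_intro (I (I (V 4) (V 3)) (V 2)) (I (V 3) (V 2)) D3_F20 5 (I (I (V 32) (V 32)) (I (V 32) (V 32))) [(2, (I (V 32) (V 32))); (3, (V 32)); (4, (V 32))] (fun v => v) D3_F37).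
  - reflexivity.
  - vm_compute; reflexivity.
  - vm_compute; reflexivity.
  - mgu_tac.
  - exact id_inj.
  - vm_compute; reflexivity.
Qed.
Definition D3_F38 : form := (I (I (I (V 35) (V 35)) (V 2)) (I (V 35) (V 2))).
Lemma D3_c38 : cd D3_F0 D3_F37 D3_F38.
Proof.
  apply (cd_intro (I (V 0) (V 1)) (I (I (V 1) (V 2)) (I (V 0) (V 2))) D3_F37 3 (I (V 35) (I (V 35) (V 35))) [(0, (V 35)); (1, (I (V 35) (V 35)))] (fun v => v) D3_F38).
  - reflexivity.
  - vm_compute; reflexivity.
  - vm_compute; reflexivity.
  - mgu_tac.
  - exact id_inj.
  - vm_compute; reflexivity.
Qed.
Definition D3_F39 : form := (I (I (V 40) (V 39)) (I (V 39) (I (V 40) (V 39)))).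
Lemma D3_c39 : cd D3_F38 D3_F3 D3_F39.
Proof.
  apply (cd_intro (I (I (V 35) (V 35)) (V 2)) (I (V 35) (V 2)) D3_F3 36 (I (I (I (V 40) (V 39)) (V 38)) (I (V 39) (V 38))) [(2, (I (V 39) (I (V 40) (V 39)))); (35, (I (V 40) (V 39))); (38, (I (V 40) (V 39)))] (fun v => v) D3_F39).
  - reflexivity.
  - vm_compute; reflexivity.
  - vm_compute; reflexivity.
  - mgu_tac.
  - exact id_inj.
  - vm_compute; reflexivity.
Qed.
Definition D3_F40 : form := (I (V 19) (I (N (V 19)) (V 12))).
Lemma D3_c40 : cd D3_F6 D3_F25 D3_F40.
Proof.
  apply (cd_intro (I (I (I (V 9) (V 8)) (V 8)) (V 2)) (I (V 9) (V 2)) D3_F25 10 (I (I (I (V 19) (V 18)) (V 12)) (I (N (V 19)) (V 12))) [(2, (I (N (V 19)) (V 12))); (8, (V 12)); (9, (V 19)); (18, (V 12))] (fun v => v) D3_F40).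
  - reflexivity.
  - vm_compute; reflexivity.
  - vm_compute; reflexivity.
  - mgu_tac.
  - exact id_inj.
  - vm_compute; reflexivity.
Qed.
Definition D3_F41 : form := (I (I (N (V 60)) (V 53)) (I (V 60) (I (N (V 60)) (V 53)))).
Lemma D3_c41 : cd D3_F39 D3_F40 D3_F41.
Proof.
  apply (cd_intro (I (V 40) (V 39)) (I (V 39) (I (V 40) (V 39))) D3_F40 41 (I (V 60) (I (N (V 60)) (V 53))) [(39, (I (N (V 60)) (V 53))); (40, (V 60))] (fun v => v) D3_F41).
  - reflexivity.
  - vm_compute; reflexivity.
  - vm_compute; reflexivity.
  - mgu_tac.
  - exact id_inj.
  - vm_compute; reflexivity.
Qed.
Definition D3_F42 : form := (I (V 67) (I (N (V 67)) (I (V 67) (V 66)))).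
Lemma D3_c42 : cd D3_F41 D3_F24 D3_F42.
Proof.
  apply (cd_intro (I (N (V 60)) (V 53)) (I (V 60) (I (N (V 60)) (V 53))) D3_F24 61 (I (N (V 67)) (I (V 67) (V 66))) [(53, (I (V 67) (V 66))); (60, (V 67))] (fun v => v) D3_F42).
  - reflexivity.
  - vm_compute; reflexivity.
  - vm_compute; reflexivity.
  - mgu_tac.
  - exact id_inj.
  - vm_compute; reflexivity.
Qed.
Definition D3_F43 : form := (I (I (I (N (V 70)) (I (V 70) (V 69))) (V 2)) (I (V 70) (V 2))).
Lemma D3_c43 : cd D3_F0 D3_F42 D3_F43.
Proof.
  apply (cd_intro (I (V 0) (V 1)) (I (I (V 1) (V 2)) (I (V 0) (V 2))) D3_F42 3 (I (V 70) (I (N (V 70)) (I (V 70) (V 69)))) [(0, (V 70)); (1, (I (N (V 70)) (I (V 70) (V 69))))] (fun v => v) D3_F43).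
  - reflexivity.
  - vm_compute; reflexivity.
  - vm_compute; reflexivity.
  - mgu_tac.
  - exact id_inj.
  - vm_compute; reflexivity.
Qed.
Definition D3_F44 : form := (I (I (V 85) (V 84)) (I (V 85) (I (V 85) (V 84)))).
Lemma D3_c44 : cd D3_F36 D3_F43 D3_F44.
Proof.
  apply (cd_intro (I (I (I (V 14) (V 13)) (V 13)) (V 2)) (I (V 13) (V 2)) D3_F43 15 (I (I (I (N (V 85)) (I (V 85) (V 84))) (V 17)) (I (V 85) (V 17))) [(2, (I (V 85) (I (V 85) (V 84)))); (13, (I (V 85) (V 84))); (14, (N (V 85))); (17, (I (V 85) (V 84)))] (fun v => v) D3_F44).
  - reflexivity.
  - vm_compute; reflexivity.
  - vm_compute; reflexivity.
  - mgu_tac.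
  - exact id_inj.
  - vm_compute; reflexivity.
Qed.
Definition D3_F45 : form := (I (V 1) (I (V 7) (V 7))).
Lemma D3_c45 : cd D3_F2 D3_F12 D3_F45.
Proof.
  apply (cd_intro (V 0) (I (V 1) (V 0)) D3_F12 2 (I (V 7) (V 7)) [(0, (I (V 7) (V 7)))] (fun v => v) D3_F45).
  - reflexivity.
  - vm_compute; reflexivity.
  - vm_compute; reflexivity.
  - mgu_tac.
  - exact id_inj.
  - vm_compute; reflexivity.
Qed.
Definition D3_F46 : form := (I (V 87) (I (V 87) (I (V 93) (V 93)))).
Lemma D3_c46 : cd D3_F44 D3_F45 D3_F46.
Proof.
  apply (cd_intro (I (V 85) (V 84)) (I (V 85) (I (V 85) (V 84))) D3_F45 86 (I (V 87) (I (V 93) (V 93))) [(84, (I (V 93) (V 93))); (85, (V 87))] (fun v => v) D3_F46).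
  - reflexivity.
  - vm_compute; reflexivity.
  - vm_compute; reflexivity.
  - mgu_tac.
  - exact id_inj.
  - vm_compute; reflexivity.
Qed.
Definition D3_F47 : form := (I (I (I (V 90) (I (V 96) (V 96))) (V 2)) (I (V 90) (V 2))).
Lemma D3_c47 : cd D3_F0 D3_F46 D3_F47.
Proof.
  apply (cd_intro (I (V 0) (V 1)) (I (I (V 1) (V 2)) (I (V 0) (V 2))) D3_F46 3 (I (V 90) (I (V 90) (I (V 96) (V 96)))) [(0, (V 90)); (1, (I (V 90) (I (V 96) (V 96))))] (fun v => v) D3_F47).
  - reflexivity.
  - vm_compute; reflexivity.
  - vm_compute; reflexivity.
  - mgu_tac.
  - exact id_inj.
  - vm_compute; reflexivity.
Qed.
Definition D3_F48 : form := (I (I (V 24) (V 12)) (I (V 12) (V 12))).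
Lemma D3_c48 : cd D3_F6 D3_F36 D3_F48.
Proof.
  apply (cd_intro (I (I (I (V 9) (V 8)) (V 8)) (V 2)) (I (V 9) (V 2)) D3_F36 10 (I (I (I (I (V 24) (V 23)) (V 23)) (V 12)) (I (V 23) (V 12))) [(2, (I (V 12) (V 12))); (8, (V 12)); (9, (I (V 24) (V 12))); (23, (V 12))] (fun v => v) D3_F48).
  - reflexivity.
  - vm_compute; reflexivity.
  - vm_compute; reflexivity.
  - mgu_tac.
  - exact id_inj.
  - vm_compute; reflexivity.
Qed.
Definition D3_F49 : form := (I (I (I (V 15) (V 15)) (V 2)) (I (I (V 27) (V 15)) (V 2))).
Lemma D3_c49 : cd D3_F0 D3_F48 D3_F49.
Proof.
  apply (cd_intro (I (V 0) (V 1)) (I (I (V 1) (V 2)) (I (V 0) (V 2))) D3_F48 3 (I (I (V 27) (V 15)) (I (V 15) (V 15))) [(0, (I (V 27) (V 15))); (1, (I (V 15) (V 15)))] (fun v => v) D3_F49).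
  - reflexivity.
  - vm_compute; reflexivity.
  - vm_compute; reflexivity.
  - mgu_tac.
  - exact id_inj.
  - vm_compute; reflexivity.
Qed.
Definition D3_F50 : form := (I (I (V 27) (I (V 32) (V 31))) (I (V 31) (I (V 32) (V 31)))).
Lemma D3_c50 : cd D3_F49 D3_F3 D3_F50.
Proof.
  apply (cd_intro (I (I (V 15) (V 15)) (V 2)) (I (I (V 27) (V 15)) (V 2)) D3_F3 28 (I (I (I (V 32) (V 31)) (V 30)) (I (V 31) (V 30))) [(2, (I (V 31) (I (V 32) (V 31)))); (15, (I (V 32) (V 31))); (30, (I (V 32) (V 31)))] (fun v => v) D3_F50).
  - reflexivity.
  - vm_compute; reflexivity.
  - vm_compute; reflexivity.
  - mgu_tac.
  - exact id_inj.
  - vm_compute; reflexivity.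
Qed.
Definition D3_F51 : form := (I (V 103) (I (V 102) (I (V 103) (V 102)))).
Lemma D3_c51 : cd D3_F43 D3_F50 D3_F51.
Proof.
  apply (cd_intro (I (I (N (V 70)) (I (V 70) (V 69))) (V 2)) (I (V 70) (V 2)) D3_F50 71 (I (I (V 98) (I (V 103) (V 102))) (I (V 102) (I (V 103) (V 102)))) [(2, (I (V 102) (I (V 103) (V 102)))); (69, (V 102)); (70, (V 103)); (98, (N (V 103)))] (fun v => v) D3_F51).
  - reflexivity.
  - vm_compute; reflexivity.
  - vm_compute; reflexivity.
  - mgu_tac.
  - exact id_inj.
  - vm_compute; reflexivity.
Qed.
Definition D3_F52 : form := (I (I (I (V 105) (I (V 106) (V 105))) (V 2)) (I (V 106) (V 2))).
Lemma D3_c52 : cd D3_F0 D3_F51 D3_F52.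
Proof.
  apply (cd_intro (I (V 0) (V 1)) (I (I (V 1) (V 2)) (I (V 0) (V 2))) D3_F51 3 (I (V 106) (I (V 105) (I (V 106) (V 105)))) [(0, (V 106)); (1, (I (V 105) (I (V 106) (V 105))))] (fun v => v) D3_F52).
  - reflexivity.
  - vm_compute; reflexivity.
  - vm_compute; reflexivity.
  - mgu_tac.
  - exact id_inj.
  - vm_compute; reflexivity.
Qed.
Definition D3_F53 : form := (I (I (V 202) (I (V 203) (V 202))) (I (V 203) (I (V 96) (V 96)))).
Lemma D3_c53 : cd D3_F47 D3_F52 D3_F53.
Proof.
  apply (cd_intro (I (I (V 90) (I (V 96) (V 96))) (V 2)) (I (V 90) (V 2)) D3_F52 97 (I (I (I (V 202) (I (V 203) (V 202))) (V 99)) (I (V 203) (V 99))) [(2, (I (V 203) (I (V 96) (V 96)))); (90, (I (V 202) (I (V 203) (V 202)))); (99, (I (V 96) (V 96)))] (fun v => v) D3_F53).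
  - reflexivity.
  - vm_compute; reflexivity.
  - vm_compute; reflexivity.
  - mgu_tac.
  - exact id_inj.
  - vm_compute; reflexivity.
Qed.
Definition D3_F54 : form := (I (V 106) (I (I (I (V 106) (V 107)) (V 109)) (I (V 107) (V 109)))).
Lemma D3_c54 : cd D3_F52 D3_F0 D3_F54.
Proof.
  apply (cd_intro (I (I (V 105) (I (V 106) (V 105))) (V 2)) (I (V 106) (V 2)) D3_F0 107 (I (I (V 107) (V 108)) (I (I (V 108) (V 109)) (I (V 107) (V 109)))) [(2, (I (I (I (V 106) (V 107)) (V 109)) (I (V 107) (V 109)))); (105, (V 107)); (108, (I (V 106) (V 107)))] (fun v => v) D3_F54).
  - reflexivity.
  - vm_compute; reflexivity.
  - vm_compute; reflexivity.
  - mgu_tac.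
  - exact id_inj.
  - vm_compute; reflexivity.
Qed.
Definition D3_F55 : form := (I (I (I (I (V 311) (V 313)) (V 311)) (V 313)) (I (V 96) (V 96))).
Lemma D3_c55 : cd D3_F53 D3_F54 D3_F55.
Proof.
  apply (cd_intro (I (V 202) (I (V 203) (V 202))) (I (V 203) (I (V 96) (V 96))) D3_F54 204 (I (V 310) (I (I (I (V 310) (V 311)) (V 313)) (I (V 311) (V 313)))) [(202, (I (V 311) (V 313))); (203, (I (I (I (V 311) (V 313)) (V 311)) (V 313))); (310, (I (V 311) (V 313)))] (fun v => v) D3_F55).
  - reflexivity.
  - vm_compute; reflexivity.
  - vm_compute; reflexivity.
  - mgu_tac.
  - exact id_inj.
  - vm_compute; reflexivity.
Qed.
Definition D3_F56 : form := (I (N (I (I (V 321) (V 323)) (V 321))) (I (V 106) (V 106))).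
Lemma D3_c56 : cd D3_F25 D3_F55 D3_F56.
Proof.
  apply (cd_intro (I (I (V 9) (V 8)) (V 2)) (I (N (V 9)) (V 2)) D3_F55 10 (I (I (I (I (V 321) (V 323)) (V 321)) (V 323)) (I (V 106) (V 106))) [(2, (I (V 106) (V 106))); (8, (V 323)); (9, (I (I (V 321) (V 323)) (V 321)))] (fun v => v) D3_F56).
  - reflexivity.
  - vm_compute; reflexivity.
  - vm_compute; reflexivity.
  - mgu_tac.
  - exact id_inj.
  - vm_compute; reflexivity.
Qed.
Definition D3_F57 : form := (I (I (I (V 416) (V 418)) (V 416)) (I (I (V 416) (V 418)) (V 416))).
Lemma D3_c57 : cd D3_F34 D3_F56 D3_F57.
Proof.
  apply (cd_intro (I (N (V 94)) (I (V 94) (V 94))) (I (V 94) (V 94)) D3_F56 95 (I (N (I (I (V 416) (V 418)) (V 416))) (I (V 201) (V 201))) [(94, (I (I (V 416) (V 418)) (V 416))); (201, (I (I (V 416) (V 418)) (V 416)))] (fun v => v) D3_F57).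
  - reflexivity.
  - vm_compute; reflexivity.
  - vm_compute; reflexivity.
  - mgu_tac.
  - exact id_inj.
  - vm_compute; reflexivity.
Qed.
Definition D3_F58 : form := (I (V 421) (I (I (V 421) (V 423)) (V 421))).
Lemma D3_c58 : cd D3_F3 D3_F57 D3_F58.
Proof.
  apply (cd_intro (I (I (V 4) (V 3)) (V 2)) (I (V 3) (V 2)) D3_F57 5 (I (I (I (V 421) (V 423)) (V 421)) (I (I (V 421) (V 423)) (V 421))) [(2, (I (I (V 421) (V 423)) (V 421))); (3, (V 421)); (4, (I (V 421) (V 423)))] (fun v => v) D3_F58).
  - reflexivity.
  - vm_compute; reflexivity.
  - vm_compute; reflexivity.
  - mgu_tac.
  - exact id_inj.
  - vm_compute; reflexivity.
Qed.
Definition D3_F59 : form := (I (I (I (I (V 424) (V 426)) (V 424)) (V 2)) (I (V 424) (V 2))).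
Lemma D3_c59 : cd D3_F0 D3_F58 D3_F59.
Proof.
  apply (cd_intro (I (V 0) (V 1)) (I (I (V 1) (V 2)) (I (V 0) (V 2))) D3_F58 3 (I (V 424) (I (I (V 424) (V 426)) (V 424))) [(0, (V 424)); (1, (I (I (V 424) (V 426)) (V 424)))] (fun v => v) D3_F59).
  - reflexivity.
  - vm_compute; reflexivity.
  - vm_compute; reflexivity.
  - mgu_tac.
  - exact id_inj.
  - vm_compute; reflexivity.
Qed.
Definition D3_F60 : form := (I (I (V 12) (V 436)) (I (V 12) (V 12))).
Lemma D3_c60 : cd D3_F6 D3_F59 D3_F60.
Proof.
  apply (cd_intro (I (I (I (V 9) (V 8)) (V 8)) (V 2)) (I (V 9) (V 2)) D3_F59 10 (I (I (I (I (V 434) (V 436)) (V 434)) (V 12)) (I (V 434) (V 12))) [(2, (I (V 12) (V 12))); (8, (V 12)); (9, (I (V 12) (V 436))); (434, (V 12))] (fun v => v) D3_F60).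
  - reflexivity.
  - vm_compute; reflexivity.
  - vm_compute; reflexivity.
  - mgu_tac.
  - exact id_inj.
  - vm_compute; reflexivity.
Qed.
Definition D3_F61 : form := (I (I (I (V 15) (V 15)) (V 2)) (I (I (V 15) (V 439)) (V 2))).
Lemma D3_c61 : cd D3_F0 D3_F60 D3_F61.
Proof.
  apply (cd_intro (I (V 0) (V 1)) (I (I (V 1) (V 2)) (I (V 0) (V 2))) D3_F60 3 (I (I (V 15) (V 439)) (I (V 15) (V 15))) [(0, (I (V 15) (V 439))); (1, (I (V 15) (V 15)))] (fun v => v) D3_F61).
  - reflexivity.
  - vm_compute; reflexivity.
  - vm_compute; reflexivity.
  - mgu_tac.
  - exact id_inj.
  - vm_compute; reflexivity.
Qed.
Definition D3_F62 : form := (I (I (I (V 444) (V 443)) (V 439)) (I (V 443) (I (V 444) (V 443)))).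
Lemma D3_c62 : cd D3_F61 D3_F3 D3_F62.
Proof.
  apply (cd_intro (I (I (V 15) (V 15)) (V 2)) (I (I (V 15) (V 439)) (V 2)) D3_F3 440 (I (I (I (V 444) (V 443)) (V 442)) (I (V 443) (V 442))) [(2, (I (V 443) (I (V 444) (V 443)))); (15, (I (V 444) (V 443))); (442, (I (V 444) (V 443)))] (fun v => v) D3_F62).
  - reflexivity.
  - vm_compute; reflexivity.
  - vm_compute; reflexivity.
  - mgu_tac.
  - exact id_inj.
  - vm_compute; reflexivity.
Qed.
Definition D3_F63 : form := (I (I (V 187) (I (V 193) (V 193))) (I (V 187) (I (V 96) (V 96)))).
Lemma D3_c63 : cd D3_F47 D3_F47 D3_F63.
Proof.
  apply (cd_intro (I (I (V 90) (I (V 96) (V 96))) (V 2)) (I (V 90) (V 2)) D3_F47 97 (I (I (I (V 187) (I (V 193) (V 193))) (V 99)) (I (V 187) (V 99))) [(2, (I (V 187) (I (V 96) (V 96)))); (90, (I (V 187) (I (V 193) (V 193)))); (99, (I (V 96) (V 96)))] (fun v => v) D3_F63).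
  - reflexivity.
  - vm_compute; reflexivity.
  - vm_compute; reflexivity.
  - mgu_tac.
  - exact id_inj.
  - vm_compute; reflexivity.
Qed.
Definition D3_F64 : form := (I (I (I (V 209) (V 209)) (I (V 209) (V 633))) (I (V 96) (V 96))).
Lemma D3_c64 : cd D3_F63 D3_F61 D3_F64.
Proof.
  apply (cd_intro (I (V 187) (I (V 193) (V 193))) (I (V 187) (I (V 96) (V 96))) D3_F61 194 (I (I (I (V 209) (V 209)) (V 196)) (I (I (V 209) (V 633)) (V 196))) [(187, (I (I (V 209) (V 209)) (I (V 209) (V 633)))); (193, (I (V 209) (V 633))); (196, (I (V 209) (V 633)))] (fun v => v) D3_F64).
  - reflexivity.
  - vm_compute; reflexivity.
  - vm_compute; reflexivity.
  - mgu_tac.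
  - exact id_inj.
  - vm_compute; reflexivity.
Qed.
Definition D3_F65 : form := (I (I (V 654) (V 1078)) (I (I (V 654) (V 654)) (I (V 654) (V 1078)))).
Lemma D3_c65 : cd D3_F62 D3_F64 D3_F65.
Proof.
  apply (cd_intro (I (I (V 444) (V 443)) (V 439)) (I (V 443) (I (V 444) (V 443))) D3_F64 445 (I (I (I (V 654) (V 654)) (I (V 654) (V 1078))) (I (V 541) (V 541))) [(439, (I (V 541) (V 541))); (443, (I (V 654) (V 1078))); (444, (I (V 654) (V 654)))] (fun v => v) D3_F65).
  - reflexivity.
  - vm_compute; reflexivity.
  - vm_compute; reflexivity.
  - mgu_tac.
  - exact id_inj.
  - vm_compute; reflexivity.
Qed.
Definition D3_F66 : form := (I (I (I (I (V 657) (V 657)) (I (V 657) (V 1081))) (V 2)) (I (I (V 657) (V 1081)) (V 2))).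
Lemma D3_c66 : cd D3_F0 D3_F65 D3_F66.
Proof.
  apply (cd_intro (I (V 0) (V 1)) (I (I (V 1) (V 2)) (I (V 0) (V 2))) D3_F65 3 (I (I (V 657) (V 1081)) (I (I (V 657) (V 657)) (I (V 657) (V 1081)))) [(0, (I (V 657) (V 1081))); (1, (I (I (V 657) (V 657)) (I (V 657) (V 1081))))] (fun v => v) D3_F66).
  - reflexivity.
  - vm_compute; reflexivity.
  - vm_compute; reflexivity.
  - mgu_tac.
  - exact id_inj.
  - vm_compute; reflexivity.
Qed.
Definition D3_F67 : form := (I (V 1) (I (V 3) (I (V 4) (I (V 5) (V 4))))).
Lemma D3_c67 : cd D3_F2 D3_F10 D3_F67.
Proof.
  apply (cd_intro (V 0) (I (V 1) (V 0)) D3_F10 2 (I (V 3) (I (V 4) (I (V 5) (V 4)))) [(0, (I (V 3) (I (V 4) (I (V 5) (V 4)))))] (fun v => v) D3_F67).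
  - reflexivity.
  - vm_compute; reflexivity.
  - vm_compute; reflexivity.
  - mgu_tac.
  - exact id_inj.
  - vm_compute; reflexivity.
Qed.
Definition D3_F68 : form := (I (I (V 19) (I (V 20) (V 19))) (I (V 19) (I (V 20) (V 19)))).
Lemma D3_c68 : cd D3_F14 D3_F67 D3_F68.
Proof.
  apply (cd_intro (I (V 7) (I (V 14) (V 14))) (I (V 14) (V 14)) D3_F67 15 (I (V 16) (I (V 18) (I (V 19) (I (V 20) (V 19))))) [(7, (V 16)); (14, (I (V 19) (I (V 20) (V 19)))); (18, (I (V 19) (I (V 20) (V 19))))] (fun v => v) D3_F68).
  - reflexivity.
  - vm_compute; reflexivity.
  - vm_compute; reflexivity.
  - mgu_tac.
  - exact id_inj.
  - vm_compute; reflexivity.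
Qed.
Definition D3_F69 : form := (I (I (V 21) (V 23)) (I (I (V 23) (V 23)) (I (V 21) (V 23)))).
Lemma D3_c69 : cd D3_F68 D3_F0 D3_F69.
Proof.
  apply (cd_intro (I (V 19) (I (V 20) (V 19))) (I (V 19) (I (V 20) (V 19))) D3_F0 21 (I (I (V 21) (V 22)) (I (I (V 22) (V 23)) (I (V 21) (V 23)))) [(19, (I (V 21) (V 23))); (20, (I (V 23) (V 23))); (22, (V 23))] (fun v => v) D3_F69).
  - reflexivity.
  - vm_compute; reflexivity.
  - vm_compute; reflexivity.
  - mgu_tac.
  - exact id_inj.
  - vm_compute; reflexivity.
Qed.
Definition D3_F70 : form := (I (I (V 16) (I (V 40) (V 42))) (I (V 16) (I (I (V 42) (V 42)) (I (V 40) (V 42))))).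
Lemma D3_c70 : cd D3_F8 D3_F69 D3_F70.
Proof.
  apply (cd_intro (I (V 17) (V 18)) (I (I (V 16) (V 17)) (I (V 16) (V 18))) D3_F69 19 (I (I (V 40) (V 42)) (I (I (V 42) (V 42)) (I (V 40) (V 42)))) [(17, (I (V 40) (V 42))); (18, (I (I (V 42) (V 42)) (I (V 40) (V 42))))] (fun v => v) D3_F70).
  - reflexivity.
  - vm_compute; reflexivity.
  - vm_compute; reflexivity.
  - mgu_tac.
  - exact id_inj.
  - vm_compute; reflexivity.
Qed.
Definition D3_F71 : form := (I (I (V 1122) (V 1124)) (I (I (V 1122) (V 1122)) (I (I (V 1124) (V 1124)) (I (V 1122) (V 1124))))).
Lemma D3_c71 : cd D3_F66 D3_F70 D3_F71.
Proof.
  apply (cd_intro (I (I (I (V 657) (V 657)) (I (V 657) (V 1081))) (V 2)) (I (I (V 657) (V 1081)) (V 2)) D3_F70 1082 (I (I (V 1098) (I (V 1122) (V 1124))) (I (V 1098) (I (I (V 1124) (V 1124)) (I (V 1122) (V 1124))))) [(2, (I (I (V 1122) (V 1122)) (I (I (V 1124) (V 1124)) (I (V 1122) (V 1124))))); (657, (V 1122)); (1081, (V 1124)); (1098, (I (V 1122) (V 1122)))] (fun v => v) D3_F71).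
  - reflexivity.
  - vm_compute; reflexivity.
  - vm_compute; reflexivity.
  - mgu_tac.
  - exact id_inj.
  - vm_compute; reflexivity.
Qed.
Definition D3_F72 : form := (I (I (V 1138) (V 1138)) (I (I (V 1138) (V 1140)) (I (I (V 1140) (V 1140)) (I (V 1138) (V 1140))))).
Lemma D3_c72 : cd D3_F7 D3_F71 D3_F72.
Proof.
  apply (cd_intro (I (V 3) (I (V 15) (V 14))) (I (V 15) (I (V 3) (V 14))) D3_F71 16 (I (I (V 1138) (V 1140)) (I (I (V 1138) (V 1138)) (I (I (V 1140) (V 1140)) (I (V 1138) (V 1140))))) [(3, (I (V 1138) (V 1140))); (14, (I (I (V 1140) (V 1140)) (I (V 1138) (V 1140)))); (15, (I (V 1138) (V 1138)))] (fun v => v) D3_F72).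
  - reflexivity.
  - vm_compute; reflexivity.
  - vm_compute; reflexivity.
  - mgu_tac.
  - exact id_inj.
  - vm_compute; reflexivity.
Qed.
Definition D3_F73 : form := (I (I (V 0) (V 0)) (I (I (V 1) (V 1)) (I (I (V 0) (V 1)) (I (V 0) (V 1))))).
Lemma D3_c73 : cd D3_F9 D3_F72 D3_F73.
Proof.
  apply (cd_intro (I (V 16) (I (V 22) (I (V 34) (V 33)))) (I (V 16) (I (V 34) (I (V 22) (V 33)))) D3_F72 35 (I (I (V 1173) (V 1173)) (I (I (V 1173) (V 1175)) (I (I (V 1175) (V 1175)) (I (V 1173) (V 1175))))) [(16, (I (V 1173) (V 1173))); (22, (I (V 1173) (V 1175))); (33, (I (V 1173) (V 1175))); (34, (I (V 1175) (V 1175)))] (fun v => swap 1175 1 ((fun v => swap 1173 0 ((fun v => v) v)) v)) D3_F73).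
  - reflexivity.
  - vm_compute; reflexivity.
  - vm_compute; reflexivity.
  - mgu_tac.
  - exact (comp_inj _ _ (comp_inj _ _ id_inj (swap_inj 1173 0)) (swap_inj 1175 1)).
  - vm_compute; reflexivity.
Qed.
Definition D3_pf : list (form * just) := [(D3_F0, Ax); (D3_F1, CD 0 0); (D3_F2, Ax); (D3_F3, CD 0 2); (D3_F4, Ax); (D3_F5, CD 3 4); (D3_F6, CD 0 5); (D3_F7, CD 1 6); (D3_F8, CD 7 0); (D3_F9, CD 8 7); (D3_F10, CD 2 2); (D3_F11, CD 4 10); (D3_F12, CD 3 11); (D3_F13, CD 5 12); (D3_F14, CD 4 13); (D3_F15, CD 6 2); (D3_F16, CD 14 15); (D3_F17, Ax); (D3_F18, CD 3 2); (D3_F19, CD 18 12); (D3_F20, CD 14 19); (D3_F21, CD 3 0); (D3_F22, CD 21 12); (D3_F23, CD 20 22); (D3_F24, CD 3 17); (D3_F25, CD 0 24); (D3_F26, CD 25 13); (D3_F27, CD 0 26); (D3_F28, CD 23 27); (D3_F29, CD 2 24); (D3_F30, CD 4 29); (D3_F31, CD 25 30); (D3_F32, CD 28 31); (D3_F33, CD 17 32); (D3_F34, CD 16 33); (D3_F35, CD 6 4); (D3_F36, CD 0 35); (D3_F37, CD 3 20); (D3_F38, CD 0 37); (D3_F39, CD 38 3); (D3_F40, CD 6 25); (D3_F41, CD 39 40); (D3_F42, CD 41 24); (D3_F43, CD 0 42); (D3_F44, CD 36 43); (D3_F45, CD 2 12); (D3_F46, CD 44 45); (D3_F47, CD 0 46);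 (D3_F48, CD 6 36); (D3_F49, CD 0 48); (D3_F50, CD 49 3); (D3_F51, CD 43 50); (D3_F52, CD 0 51); (D3_F53, CD 47 52); (D3_F54, CD 52 0); (D3_F55, CD 53 54); (D3_F56, CD 25 55); (D3_F57, CD 34 56); (D3_F58, CD 3 57); (D3_F59, CD 0 58); (D3_F60, CD 6 59); (D3_F61, CD 0 60); (D3_F62, CD 61 3); (D3_F63, CD 47 47); (D3_F64, CD 63 61); (D3_F65, CD 62 64); (D3_F66, CD 0 65); (D3_F67, CD 2 10); (D3_F68, CD 14 67); (D3_F69, CD 68 0); (D3_F70, CD 8 69); (D3_F71, CD 66 70); (D3_F72, CD 7 71); (D3_F73, CD 9 72)].
Lemma D3_valid : forall k, k < length D3_pf -> valid_line D3_pf k.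
Proof.
  intros k Hk.
  destruct k as [|k]; [exact (vl_ax D3_pf 0 D3_F0 A2 eq_refl ltac:(unfold axioms; simpl; tauto) (variant_refl _))|].
  destruct k as [|k]; [exact (vl_cd D3_pf 1 D3_F1 0 0 D3_F0 D3_F0 eq_refl ltac:(lia) ltac:(lia) eq_refl eq_refl D3_c1)|].
  destruct k as [|k]; [exact (vl_ax D3_pf 2 D3_F2 A1 eq_refl ltac:(unfold axioms; simpl; tauto) (variant_refl _))|].
  destruct k as [|k]; [exact (vl_cd D3_pf 3 D3_F3 0 2 D3_F0 D3_F2 eq_refl ltac:(lia) ltac:(lia) eq_refl eq_refl D3_c3)|].
  destruct k as [|k]; [exact (vl_ax D3_pf 4 D3_F4 A3 eq_refl ltac:(unfold axioms; simpl; tauto) (variant_refl _))|].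
  destruct k as [|k]; [exact (vl_cd D3_pf 5 D3_F5 3 4 D3_F3 D3_F4 eq_refl ltac:(lia) ltac:(lia) eq_refl eq_refl D3_c5)|].
  destruct k as [|k]; [exact (vl_cd D3_pf 6 D3_F6 0 5 D3_F0 D3_F5 eq_refl ltac:(lia) ltac:(lia) eq_refl eq_refl D3_c6)|].
  destruct k as [|k]; [exact (vl_cd D3_pf 7 D3_F7 1 6 D3_F1 D3_F6 eq_refl ltac:(lia) ltac:(lia) eq_refl eq_refl D3_c7)|].
  destruct k as [|k]; [exact (vl_cd D3_pf 8 D3_F8 7 0 D3_F7 D3_F0 eq_refl ltac:(lia) ltac:(lia) eq_refl eq_refl D3_c8)|].
  destruct k as [|k]; [exact (vl_cd D3_pf 9 D3_F9 8 7 D3_F8 D3_F7 eq_refl ltac:(lia) ltac:(lia) eq_refl eq_refl D3_c9)|].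
  destruct k as [|k]; [exact (vl_cd D3_pf 10 D3_F10 2 2 D3_F2 D3_F2 eq_refl ltac:(lia) ltac:(lia) eq_refl eq_refl D3_c10)|].
  destruct k as [|k]; [exact (vl_cd D3_pf 11 D3_F11 4 10 D3_F4 D3_F10 eq_refl ltac:(lia) ltac:(lia) eq_refl eq_refl D3_c11)|].
  destruct k as [|k]; [exact (vl_cd D3_pf 12 D3_F12 3 11 D3_F3 D3_F11 eq_refl ltac:(lia) ltac:(lia) eq_refl eq_refl D3_c12)|].
  destruct k as [|k]; [exact (vl_cd D3_pf 13 D3_F13 5 12 D3_F5 D3_F12 eq_refl ltac:(lia) ltac:(lia) eq_refl eq_refl D3_c13)|].
  destruct k as [|k]; [exact (vl_cd D3_pf 14 D3_F14 4 13 D3_F4 D3_F13 eq_refl ltac:(lia) ltac:(lia) eq_refl eq_refl D3_c14)|].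
  destruct k as [|k]; [exact (vl_cd D3_pf 15 D3_F15 6 2 D3_F6 D3_F2 eq_refl ltac:(lia) ltac:(lia) eq_refl eq_refl D3_c15)|].
  destruct k as [|k]; [exact (vl_cd D3_pf 16 D3_F16 14 15 D3_F14 D3_F15 eq_refl ltac:(lia) ltac:(lia) eq_refl eq_refl D3_c16)|].
  destruct k as [|k]; [exact (vl_ax D3_pf 17 D3_F17 A4 eq_refl ltac:(unfold axioms; simpl; tauto) (variant_refl _))|].
  destruct k as [|k]; [exact (vl_cd D3_pf 18 D3_F18 3 2 D3_F3 D3_F2 eq_refl ltac:(lia) ltac:(lia) eq_refl eq_refl D3_c18)|].
  destruct k as [|k]; [exact (vl_cd D3_pf 19 D3_F19 18 12 D3_F18 D3_F12 eq_refl ltac:(lia) ltac:(lia) eq_refl eq_refl D3_c19)|].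
  destruct k as [|k]; [exact (vl_cd D3_pf 20 D3_F20 14 19 D3_F14 D3_F19 eq_refl ltac:(lia) ltac:(lia) eq_refl eq_refl D3_c20)|].
  destruct k as [|k]; [exact (vl_cd D3_pf 21 D3_F21 3 0 D3_F3 D3_F0 eq_refl ltac:(lia) ltac:(lia) eq_refl eq_refl D3_c21)|].
  destruct k as [|k]; [exact (vl_cd D3_pf 22 D3_F22 21 12 D3_F21 D3_F12 eq_refl ltac:(lia) ltac:(lia) eq_refl eq_refl D3_c22)|].
  destruct k as [|k]; [exact (vl_cd D3_pf 23 D3_F23 20 22 D3_F20 D3_F22 eq_refl ltac:(lia) ltac:(lia) eq_refl eq_refl D3_c23)|].
  destruct k as [|k]; [exact (vl_cd D3_pf 24 D3_F24 3 17 D3_F3 D3_F17 eq_refl ltac:(lia) ltac:(lia) eq_refl eq_refl D3_c24)|].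
  destruct k as [|k]; [exact (vl_cd D3_pf 25 D3_F25 0 24 D3_F0 D3_F24 eq_refl ltac:(lia) ltac:(lia) eq_refl eq_refl D3_c25)|].
  destruct k as [|k]; [exact (vl_cd D3_pf 26 D3_F26 25 13 D3_F25 D3_F13 eq_refl ltac:(lia) ltac:(lia) eq_refl eq_refl D3_c26)|].
  destruct k as [|k]; [exact (vl_cd D3_pf 27 D3_F27 0 26 D3_F0 D3_F26 eq_refl ltac:(lia) ltac:(lia) eq_refl eq_refl D3_c27)|].
  destruct k as [|k]; [exact (vl_cd D3_pf 28 D3_F28 23 27 D3_F23 D3_F27 eq_refl ltac:(lia) ltac:(lia) eq_refl eq_refl D3_c28)|].
  destruct k as [|k]; [exact (vl_cd D3_pf 29 D3_F29 2 24 D3_F2 D3_F24 eq_refl ltac:(lia) ltac:(lia) eq_refl eq_refl D3_c29)|].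
  destruct k as [|k]; [exact (vl_cd D3_pf 30 D3_F30 4 29 D3_F4 D3_F29 eq_refl ltac:(lia) ltac:(lia) eq_refl eq_refl D3_c30)|].
  destruct k as [|k]; [exact (vl_cd D3_pf 31 D3_F31 25 30 D3_F25 D3_F30 eq_refl ltac:(lia) ltac:(lia) eq_refl eq_refl D3_c31)|].
  destruct k as [|k]; [exact (vl_cd D3_pf 32 D3_F32 28 31 D3_F28 D3_F31 eq_refl ltac:(lia) ltac:(lia) eq_refl eq_refl D3_c32)|].
  destruct k as [|k]; [exact (vl_cd D3_pf 33 D3_F33 17 32 D3_F17 D3_F32 eq_refl ltac:(lia) ltac:(lia) eq_refl eq_refl D3_c33)|].
  destruct k as [|k]; [exact (vl_cd D3_pf 34 D3_F34 16 33 D3_F16 D3_F33 eq_refl ltac:(lia) ltac:(lia) eq_refl eq_refl D3_c34)|].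
  destruct k as [|k]; [exact (vl_cd D3_pf 35 D3_F35 6 4 D3_F6 D3_F4 eq_refl ltac:(lia) ltac:(lia) eq_refl eq_refl D3_c35)|].
  destruct k as [|k]; [exact (vl_cd D3_pf 36 D3_F36 0 35 D3_F0 D3_F35 eq_refl ltac:(lia) ltac:(lia) eq_refl eq_refl D3_c36)|].
  destruct k as [|k]; [exact (vl_cd D3_pf 37 D3_F37 3 20 D3_F3 D3_F20 eq_refl ltac:(lia) ltac:(lia) eq_refl eq_refl D3_c37)|].
  destruct k as [|k]; [exact (vl_cd D3_pf 38 D3_F38 0 37 D3_F0 D3_F37 eq_refl ltac:(lia) ltac:(lia) eq_refl eq_refl D3_c38)|].
  destruct k as [|k]; [exact (vl_cd D3_pf 39 D3_F39 38 3 D3_F38 D3_F3 eq_refl ltac:(lia) ltac:(lia) eq_refl eq_refl D3_c39)|].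
  destruct k as [|k]; [exact (vl_cd D3_pf 40 D3_F40 6 25 D3_F6 D3_F25 eq_refl ltac:(lia) ltac:(lia) eq_refl eq_refl D3_c40)|].
  destruct k as [|k]; [exact (vl_cd D3_pf 41 D3_F41 39 40 D3_F39 D3_F40 eq_refl ltac:(lia) ltac:(lia) eq_refl eq_refl D3_c41)|].
  destruct k as [|k]; [exact (vl_cd D3_pf 42 D3_F42 41 24 D3_F41 D3_F24 eq_refl ltac:(lia) ltac:(lia) eq_refl eq_refl D3_c42)|].
  destruct k as [|k]; [exact (vl_cd D3_pf 43 D3_F43 0 42 D3_F0 D3_F42 eq_refl ltac:(lia) ltac:(lia) eq_refl eq_refl D3_c43)|].
  destruct k as [|k]; [exact (vl_cd D3_pf 44 D3_F44 36 43 D3_F36 D3_F43 eq_refl ltac:(lia) ltac:(lia) eq_refl eq_refl D3_c44)|].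
  destruct k as [|k]; [exact (vl_cd D3_pf 45 D3_F45 2 12 D3_F2 D3_F12 eq_refl ltac:(lia) ltac:(lia) eq_refl eq_refl D3_c45)|].
  destruct k as [|k]; [exact (vl_cd D3_pf 46 D3_F46 44 45 D3_F44 D3_F45 eq_refl ltac:(lia) ltac:(lia) eq_refl eq_refl D3_c46)|].
  destruct k as [|k]; [exact (vl_cd D3_pf 47 D3_F47 0 46 D3_F0 D3_F46 eq_refl ltac:(lia) ltac:(lia) eq_refl eq_refl D3_c47)|].
  destruct k as [|k]; [exact (vl_cd D3_pf 48 D3_F48 6 36 D3_F6 D3_F36 eq_refl ltac:(lia) ltac:(lia) eq_refl eq_refl D3_c48)|].
  destruct k as [|k]; [exact (vl_cd D3_pf 49 D3_F49 0 48 D3_F0 D3_F48 eq_refl ltac:(lia) ltac:(lia) eq_refl eq_refl D3_c49)|].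
  destruct k as [|k]; [exact (vl_cd D3_pf 50 D3_F50 49 3 D3_F49 D3_F3 eq_refl ltac:(lia) ltac:(lia) eq_refl eq_refl D3_c50)|].
  destruct k as [|k]; [exact (vl_cd D3_pf 51 D3_F51 43 50 D3_F43 D3_F50 eq_refl ltac:(lia) ltac:(lia) eq_refl eq_refl D3_c51)|].
  destruct k as [|k]; [exact (vl_cd D3_pf 52 D3_F52 0 51 D3_F0 D3_F51 eq_refl ltac:(lia) ltac:(lia) eq_refl eq_refl D3_c52)|].
  destruct k as [|k]; [exact (vl_cd D3_pf 53 D3_F53 47 52 D3_F47 D3_F52 eq_refl ltac:(lia) ltac:(lia) eq_refl eq_refl D3_c53)|].
  destruct k as [|k]; [exact (vl_cd D3_pf 54 D3_F54 52 0 D3_F52 D3_F0 eq_refl ltac:(lia) ltac:(lia) eq_refl eq_refl D3_c54)|].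
  destruct k as [|k]; [exact (vl_cd D3_pf 55 D3_F55 53 54 D3_F53 D3_F54 eq_refl ltac:(lia) ltac:(lia) eq_refl eq_refl D3_c55)|].
  destruct k as [|k]; [exact (vl_cd D3_pf 56 D3_F56 25 55 D3_F25 D3_F55 eq_refl ltac:(lia) ltac:(lia) eq_refl eq_refl D3_c56)|].
  destruct k as [|k]; [exact (vl_cd D3_pf 57 D3_F57 34 56 D3_F34 D3_F56 eq_refl ltac:(lia) ltac:(lia) eq_refl eq_refl D3_c57)|].
  destruct k as [|k]; [exact (vl_cd D3_pf 58 D3_F58 3 57 D3_F3 D3_F57 eq_refl ltac:(lia) ltac:(lia) eq_refl eq_refl D3_c58)|].
  destruct k as [|k]; [exact (vl_cd D3_pf 59 D3_F59 0 58 D3_F0 D3_F58 eq_refl ltac:(lia) ltac:(lia) eq_refl eq_refl D3_c59)|].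
  destruct k as [|k]; [exact (vl_cd D3_pf 60 D3_F60 6 59 D3_F6 D3_F59 eq_refl ltac:(lia) ltac:(lia) eq_refl eq_refl D3_c60)|].
  destruct k as [|k]; [exact (vl_cd D3_pf 61 D3_F61 0 60 D3_F0 D3_F60 eq_refl ltac:(lia) ltac:(lia) eq_refl eq_refl D3_c61)|].
  destruct k as [|k]; [exact (vl_cd D3_pf 62 D3_F62 61 3 D3_F61 D3_F3 eq_refl ltac:(lia) ltac:(lia) eq_refl eq_refl D3_c62)|].
  destruct k as [|k]; [exact (vl_cd D3_pf 63 D3_F63 47 47 D3_F47 D3_F47 eq_refl ltac:(lia) ltac:(lia) eq_refl eq_refl D3_c63)|].
  destruct k as [|k]; [exact (vl_cd D3_pf 64 D3_F64 63 61 D3_F63 D3_F61 eq_refl ltac:(lia) ltac:(lia) eq_refl eq_refl D3_c64)|].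
  destruct k as [|k]; [exact (vl_cd D3_pf 65 D3_F65 62 64 D3_F62 D3_F64 eq_refl ltac:(lia) ltac:(lia) eq_refl eq_refl D3_c65)|].
  destruct k as [|k]; [exact (vl_cd D3_pf 66 D3_F66 0 65 D3_F0 D3_F65 eq_refl ltac:(lia) ltac:(lia) eq_refl eq_refl D3_c66)|].
  destruct k as [|k]; [exact (vl_cd D3_pf 67 D3_F67 2 10 D3_F2 D3_F10 eq_refl ltac:(lia) ltac:(lia) eq_refl eq_refl D3_c67)|].
  destruct k as [|k]; [exact (vl_cd D3_pf 68 D3_F68 14 67 D3_F14 D3_F67 eq_refl ltac:(lia) ltac:(lia) eq_refl eq_refl D3_c68)|].
  destruct k as [|k]; [exact (vl_cd D3_pf 69 D3_F69 68 0 D3_F68 D3_F0 eq_refl ltac:(lia) ltac:(lia) eq_refl eq_refl D3_c69)|].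
  destruct k as [|k]; [exact (vl_cd D3_pf 70 D3_F70 8 69 D3_F8 D3_F69 eq_refl ltac:(lia) ltac:(lia) eq_refl eq_refl D3_c70)|].
  destruct k as [|k]; [exact (vl_cd D3_pf 71 D3_F71 66 70 D3_F66 D3_F70 eq_refl ltac:(lia) ltac:(lia) eq_refl eq_refl D3_c71)|].
  destruct k as [|k]; [exact (vl_cd D3_pf 72 D3_F72 7 71 D3_F7 D3_F71 eq_refl ltac:(lia) ltac:(lia) eq_refl eq_refl D3_c72)|].
  destruct k as [|k]; [exact (vl_cd D3_pf 73 D3_F73 9 72 D3_F9 D3_F72 eq_refl ltac:(lia) ltac:(lia) eq_refl eq_refl D3_c73)|].
  exfalso; simpl in Hk; lia.
Qed.
Lemma D3_proof : cd_proof D3_pf D3 /\ dn_free D3_pf.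
Proof.
  split; [split; [discriminate | split; [exact D3_valid | reflexivity]] | apply dnb_ok; vm_compute; reflexivity].
Qed.

Theorem lemma6 :
  (exists pf, cd_proof pf D1 /\ dn_free pf) /\
  (exists pf, cd_proof pf D2 /\ dn_free pf) /\
  (exists pf, cd_proof pf D3 /\ dn_free pf).
Proof.
  split; [exists D1_pf; exact D1_proof|].
  split; [exists D2_pf; exact D2_proof|].
  exists D3_pf; exact D3_proof.
Qed.
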